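(* For every $n\in\mathbb N$ there exists $k(n)\in\mathbb N$ such that the following holds: whenever $D$ is a digraph with an end $\omega$ of in-degree at least $k(n)$ and $\mathcal R$ is a set of $k(n)$ pairwise disjoint rays in $\omega$, then $D$ contains a subdivision of the hexagonal grid of width $n$ or of the circular grid of width $n$ such that each of its rays $R_i$ (from the definition of these grids) corresponds, in the subdivision, to a ray from $\mathcal R$.
   Context: A ray is an orientation of a one-way infinite path with every edge oriented towards infinity; an anti-ray one with every edge oriented away from infinity; dipath = directed path. For rays or anti-rays $Q,R$ write $Q\le R$ if there are infinitely many pairwise disjoint $Q$--$R$ dipaths and $Q\sim R$ if $Q\le R$ and $R\le Q$; ends are the $\sim$-classes. The in-degree of an end is the maximum number (in $\mathbb N\cup\{\infty\}$) of pairwise disjoint rays in it. Let $R_1,\ldots,R_n$ be pairwise disjoint rays, $R_i=r^i_1r^i_2\ldots$. The hexagonal grid of width $n$ is $\bigcup_{i=1}^nR_i$ together with the edges $r^i_jr^{i+1}_j$ for all pairs $(i,j)$ with $i\equiv j\equiv1\pmod 2$ and $j\equiv1\pmod4$, or $i\equiv j\equiv0\pmod2$ and $j\equiv2\pmod4$, and the edges $r^{i+1}_jr^i_j$ for all pairs $(i,j)$ with $i\equiv j\equiv1\pmod2$ and $j\equiv3\pmod4$, or $i\equiv j\equiv0\pmod2$ and $j\equiv0\pmod4$ (where $1\le i<n$). The circular grid of width $n$ is $\bigcup_{i=1}^nR_i$ together with the edges $r^i_{j+1}r^{i+1}_j$ for all odd $j$ and all $i\in\{2,\ldots,n-1\}$,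 the edges $r^1_jr^2_j$ for all odd $j$, and the edges $r^n_jr^1_j$ for all even $j$. A subdivision of $H$ replaces each edge $uv$ by a new $u$--$v$ dipath, these internally disjoint with no inner vertices in $V(H)$. *)

(* Defs.v *)
From Stdlib Require Import Arith Lia List.
Import ListNotations.

Section Digraphs.
Variable V : Type.
Variable E : V -> V -> Prop.

Fixpoint chain (p : list V) : Prop :=
  match p with
  | x :: ((y :: _) as t) => E x y /\ chain t
  | _ => True
  end.

Definition is_dipath (p : list V) : Prop :=
  p <> [] /\ NoDup p /\ chain p.

Definition is_ray (r : nat -> V) : Prop :=
  (forall s t, r s = r t -> s = t) /\ (forall t, E (r t) (r (S t))).

Definition is_antiray (r : nat -> V) : Prop :=
  (forall s t, r s = r t -> s = t) /\ (forall t, E (r (S t)) (r t)).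

Definition raylike (r : nat -> V) : Prop := is_ray r \/ is_antiray r.

Definition range (r : nat -> V) : V -> Prop := fun x => exists t, r t = x.

Definition AB_dipath (A B : V -> Prop) (p : list V) : Prop :=
  is_dipath p /\
  forall i x, nth_error p i = Some x ->
    (A x <-> i = 0) /\ (B x <-> S i = length p).

Definition vdisjoint (p q : list V) : Prop :=
  forall x, In x p -> In x q -> False.

Definition ray_le (Q R : nat -> V) : Prop :=
  exists P : nat -> list V,
    (forall m, AB_dipath (range Q) (range R) (P m)) /\
    (forall m m', m <> m' -> vdisjoint (P m) (P m')).

Definition ray_equiv (Q R : nat -> V) : Prop := ray_le Q R /\ ray_le R Q.

Definition is_end (w : (nat -> V) -> Prop) : Prop :=
  exists r0, raylike r0 /\
    forall q, w q <-> (raylike q /\ ray_equiv q r0).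

Definition rays_disjoint (r s : nat -> V) : Prop :=
  forall a b, r a <> s b.

(* The in-degree of the end w (max number of disjoint rays in w,
   in N u {oo}) is at least k. *)
Definition end_indeg_ge (w : (nat -> V) -> Prop) (k : nat) : Prop :=
  exists f : nat -> nat -> V,
    (forall i, i < k -> is_ray (f i) /\ w (f i)) /\
    (forall i j, i < k -> j < k -> i <> j -> rays_disjoint (f i) (f j)).

Definition inner (p : list V) (x : V) : Prop :=
  exists i, 0 < i /\ S i < length p /\ nth_error p i = Some x.

Definition is_subdivision {W : Type} (HV : W -> Prop) (HE : W -> W -> Prop)
    (phi : W -> V) (P : W -> W -> list V) : Prop :=
  (forall u v, HV u -> HV v -> phi u = phi v -> u = v) /\
  (forall u v, HE u v ->
     is_dipath (P u v) /\
     nth_error (P u v) 0 = Some (phi u) /\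
     nth_error (P u v) (length (P u v) - 1) = Some (phi v)) /\
  (forall u v x, HE u v -> inner (P u v) x -> ~ (exists w, HV w /\ phi w = x)) /\
  (forall u v u' v' x, HE u v -> HE u' v' -> inner (P u v) x -> In x (P u' v') ->
     u = u' /\ v = v').

End Digraphs.

(* Grids: vertex r^i_j is encoded as the pair (i, j), 1 <= i <= n, 1 <= j. *)
Definition grid_vert (n : nat) (v : nat * nat) : Prop :=
  1 <= fst v <= n /\ 1 <= snd v.

Definition ray_edge (n : nat) (u v : nat * nat) : Prop :=
  exists i j, 1 <= i <= n /\ 1 <= j /\ u = (i, j) /\ v = (i, S j).

Definition hex_edge (n : nat) (u v : nat * nat) : Prop :=
  ray_edge n u v \/
  (exists i j, 1 <= i < n /\ 1 <= j /\ u = (i, j) /\ v = (S i, j) /\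
     ((Nat.odd i = true /\ j mod 4 = 1) \/ (Nat.even i = true /\ j mod 4 = 2))) \/
  (exists i j, 1 <= i < n /\ 1 <= j /\ u = (S i, j) /\ v = (i, j) /\
     ((Nat.odd i = true /\ j mod 4 = 3) \/ (Nat.even i = true /\ j mod 4 = 0))).

Definition circ_edge (n : nat) (u v : nat * nat) : Prop :=
  ray_edge n u v \/
  (exists i j, 2 <= i <= n - 1 /\ 1 <= j /\ Nat.odd j = true /\
     u = (i, S j) /\ v = (S i, j)) \/
  (exists j, 2 <= n /\ 1 <= j /\ Nat.odd j = true /\ u = (1, j) /\ v = (2, j)) \/
  (exists j, 1 <= n /\ 1 <= j /\ Nat.even j = true /\ u = (n, j) /\ v = (1, j)).

Definition rays_correspond {V : Type} (n k : nat) (Rs : nat -> nat -> V)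
    (phi : nat * nat -> V) (P : nat * nat -> nat * nat -> list V) : Prop :=
  forall i, 1 <= i <= n ->
    exists m (t : nat -> nat), m < k /\
      forall j, 1 <= j ->
        t j < t (S j) /\
        phi (i, j) = Rs m (t j) /\
        P (i, j) (i, S j) = map (Rs m) (seq (t j) (S (t (S j) - t j))).

Arguments chain {V}. Arguments is_dipath {V}. Arguments is_ray {V}.
Arguments is_antiray {V}. Arguments raylike {V}. Arguments range {V}.
Arguments AB_dipath {V}. Arguments vdisjoint {V}. Arguments ray_le {V}.
Arguments ray_equiv {V}. Arguments is_end {V}. Arguments rays_disjoint {V}.
Arguments end_indeg_ge {V}. Arguments inner {V}. Arguments is_subdivision {V} E {W}.

(* Main.v *)
Require Import Defs.
From Stdlib Require Import Arith Lia List Classical ClassicalEpsilon FinFun Bool.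
Import ListNotations.

Section Walks.
Variable V : Type.
Variable E : V -> V -> Prop.

Lemma chain_cons2 x y l : chain E (x :: y :: l) <-> E x y /\ chain E (y :: l).
Proof. simpl. tauto. Qed.

Lemma chain_tail x l : chain E (x :: l) -> chain E l.
Proof. destruct l; simpl; tauto. Qed.

Lemma chain_app_r l1 l2 : chain E (l1 ++ l2) -> chain E l2.
Proof. induction l1; simpl; intros; auto. apply IHl1. eapply chain_tail; eauto. Qed.

Lemma chain_app_l l1 l2 : chain E (l1 ++ l2) -> chain E l1.
Proof.
  induction l1 as [|x l1 IH]; simpl; auto.
  destruct l1 as [|y l1']; simpl; auto.
  intros [H1 H2]. split; auto. apply IH. exact H2.
Qed.

Lemma chain_app l1 y l2 : chain E (l1 ++ [y]) -> chain E (y :: l2) -> chain E (l1 ++ y :: l2).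
Proof.
  induction l1 as [|x l1 IH]; simpl; auto.
  destruct l1 as [|z l1']; simpl.
  - tauto.
  - intros [H1 H2] H3. split; auto. apply IH; auto.
Qed.

Lemma last_app_cons (l1 l2 : list V) y d : last (l1 ++ y :: l2) d = last (y :: l2) d.
Proof.
  induction l1 as [|x l1 IH]; simpl; auto.
  rewrite IH. destruct l1; simpl; auto.
Qed.

Lemma last_cons2 (x : V) l d : l <> [] -> last (x :: l) d = last l d.
Proof. destruct l; simpl; congruence. Qed.

Lemma walk_to_path : forall n (l : list V), length l <= n -> chain E l -> l <> [] ->
  exists p, NoDup p /\ chain E p /\ p <> [] /\ hd_error p = hd_error l /\
    (forall d, last p d = last l d) /\ incl p l.
Proof.
  induction n as [|n IH]; intros l Hlen Hc Hne.
  - destruct l; simpl in *; [congruence|lia].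
  - destruct l as [|x t]; [congruence|].
    destruct (classic (In x t)) as [Hin|Hnin].
    + destruct (in_split _ _ Hin) as [l1 [l2 ->]].
      assert (Hc2 : chain E (x :: l2)).
      { change (x :: l1 ++ x :: l2) with ((x :: l1) ++ x :: l2) in Hc. eapply chain_app_r; eauto. }
      destruct (IH (x :: l2)) as [p [Hp1 [Hp2 [Hp3 [Hp4 [Hp5 Hp6]]]]]]; auto.
      { simpl in *. rewrite length_app in Hlen. simpl in Hlen. lia. }
      { congruence. }
      exists p. split; [|split; [|split; [|split; [|split]]]]; auto.
      * intros d. rewrite Hp5. change (x :: l1 ++ x :: l2) with ((x :: l1) ++ x :: l2).
        rewrite last_app_cons. auto.
      * intros z Hz. apply Hp6 in Hz. simpl in Hz |- *. destruct Hz; auto.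
        right. apply in_or_app. simpl. auto.
    + destruct t as [|y t2].
      * exists [x]. split; [|split; [|split; [|split; [|split]]]]; auto.
        -- constructor; auto. constructor.
        -- apply incl_refl.
      * destruct (IH (y :: t2)) as [p [Hp1 [Hp2 [Hp3 [Hp4 [Hp5 Hp6]]]]]]; auto.
        { simpl in *; lia. }
        { eapply chain_tail; eauto. }
        { congruence. }
        exists (x :: p). destruct p as [|z p2]; [congruence|].
        simpl in Hp4. inversion Hp4; subst z.
        split; [|split; [|split; [|split; [|split]]]].
        -- constructor; [intro Hx; apply Hnin; apply Hp6; exact Hx | exact Hp1].
        -- simpl. split; auto. simpl in Hc. tauto.
        -- congruence.
        -- reflexivity.
        -- intros d. rewrite (last_cons2 x (y :: p2)) by congruence. rewrite Hp5. rewrite (last_cons2 x (y :: t2)) by congruence. auto.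
        -- intros z Hz. simpl in Hz. destruct Hz as [<-|Hz]; simpl; auto. right. apply Hp6. exact Hz.
Qed.

End Walks.

Section L.
Context {V : Type}.

Definition lst (w : list V) (y : V) := nth_error w (length w - 1) = Some y.

Lemma lst_last w d : w <> [] -> lst w (last w d).
Proof.
  unfold lst. induction w as [|x w IH]; intros H; [congruence|].
  destruct w as [|y w']; simpl; auto.
  simpl in IH. rewrite Nat.sub_0_r in IH. apply IH. congruence.
Qed.

Lemma lst_single x y : lst [x] y <-> x = y.
Proof. unfold lst; simpl; split; congruence. Qed.

Lemma lst_app w1 w2 y : w2 <> [] -> lst w2 y -> lst (w1 ++ w2) y.
Proof.
  unfold lst. intros Hne H. rewrite nth_error_app2; rewrite length_app.
  - replace (length w1 + length w2 - 1 - length w1) with (length w2 - 1) by lia. auto.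
  - destruct w2; [congruence|simpl; lia].
Qed.

Lemma lst_cons x w y : w <> [] -> lst w y -> lst (x :: w) y.
Proof. intros. change (x :: w) with ([x] ++ w). apply lst_app; auto. Qed.

Lemma lst_In w y : lst w y -> In y w.
Proof. unfold lst. intros H. eapply nth_error_In; eauto. Qed.

Lemma lst_unique w y y' : lst w y -> lst w y' -> y = y'.
Proof. unfold lst; congruence. Qed.

Lemma lst_app_inv w1 w2 y : w2 <> [] -> lst (w1 ++ w2) y -> lst w2 y.
Proof.
  intros Hne H. destruct (@exists_last _ w2 Hne) as [w' [z ->]].
  pose proof (lst_last (w1 ++ w' ++ [z]) z) as H1.
  rewrite app_assoc in H1, H. rewrite last_last in H1.
  assert (y = z). { eapply lst_unique; eauto. apply H1. destruct w1; simpl; congruence. }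
  subst. pose proof (lst_last (w' ++ [z]) z). rewrite last_last in H0. apply H0. destruct w'; simpl; congruence.
Qed.

Lemma in_split_pos (l : list V) z : In z l -> nth_error l 0 = Some z \/ lst l z \/ inner l z.
Proof.
  intros H. destruct (In_nth_error _ _ H) as [i Hi].
  assert (i < length l) by (apply nth_error_Some; congruence).
  destruct i as [|i]; [auto|].
  destruct (Nat.eq_dec (S i) (length l - 1)) as [He|He].
  - right; left. unfold lst. rewrite <- He. auto.
  - right; right. exists (S i). split; [lia|]. split; [lia|]. auto.
Qed.

Lemma inner_In (l : list V) z : inner l z -> In z l.
Proof. intros [i [_ [_ H]]]. eapply nth_error_In; eauto. Qed.

Lemma inner_not_ends (l : list V) z x y : NoDup l -> nth_error l 0 = Some x -> lst l y -> inner l z -> z <> x /\ z <> y.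
Proof.
  intros Hnd H0 Hl [i [Hi1 [Hi2 Hi]]]. rewrite NoDup_nth_error in Hnd. unfold lst in Hl.
  split; intros ->.
  - assert (i = 0) by (apply Hnd; [lia| congruence]). lia.
  - assert (i = length l - 1) by (apply Hnd; [lia| congruence]). lia.
Qed.

Lemma nth0_app (w1 w2 : list V) x : nth_error w1 0 = Some x -> nth_error (w1 ++ w2) 0 = Some x.
Proof. destruct w1; simpl; congruence. Qed.

End L.


Section Gen.
Context {V : Type}.
Context {E : V -> V -> Prop}.

Lemma chain_join l1 y l2 : chain E l1 -> lst l1 y -> chain E (y :: l2) -> chain E (l1 ++ l2).
Proof.
  intros H1 H2 H3. assert (Hne : l1 <> []) by (destruct l1; unfold lst in H2; simpl in H2; congruence).
  destruct (@exists_last _ l1 Hne) as [l1' [z Hz]]. subst l1.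
  assert (z = y).
  { pose proof (lst_last (l1' ++ [z]) z Hne) as H4. rewrite last_last in H4. eapply lst_unique; eauto. }
  subst z. rewrite <- app_assoc. simpl. apply chain_app; auto.
Qed.

Lemma lst_join (l1 : list V) z l2 y : l1 <> [] -> lst l1 z -> lst (z :: l2) y -> lst (l1 ++ l2) y.
Proof.
  intros Hne H1 H2. destruct l2 as [|w l2].
  - rewrite app_nil_r. apply (proj1 (lst_single z y)) in H2. subst. exact H1.
  - apply lst_app; [congruence|]. change (z :: w :: l2) with ([z] ++ w :: l2) in H2.
    eapply lst_app_inv; eauto. congruence.
Qed.

Lemma chain_seq (f : nat -> V) a m : (forall t, a <= t < a + m -> E (f t) (f (S t))) -> chain E (map f (seq a (S m))).
Proof.
  revert a. induction m as [|m IH]; intros a Hf; simpl; auto.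
  split; [apply Hf; lia|]. specialize (IH (S a)). simpl in IH. apply IH. intros t Ht; apply Hf; lia.
Qed.

Lemma lst_seq (f : nat -> V) a m : lst (map f (seq a (S m))) (f (a + m)).
Proof.
  unfold lst. rewrite length_map, length_seq. replace (S m - 1) with m by lia.
  rewrite nth_error_map. rewrite nth_error_seq. destruct (Nat.ltb_spec m (S m)); [|lia]. reflexivity.
Qed.

Lemma lst_last_eq (w : list V) y d : lst w y -> last w d = y.
Proof.
  intros H. assert (w <> []) by (destruct w; unfold lst in H; simpl in H; congruence).
  eapply lst_unique; eauto. apply lst_last; auto.
Qed.

End Gen.

Section Rays.
Context {V : Type} {E : V -> V -> Prop}.
Variable k : nat.
Variable Rs : nat -> nat -> V.
Hypothesis Hray : forall m, m < k -> is_ray E (Rs m).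
Hypothesis Hdisj : forall m m', m < k -> m' < k -> m <> m' -> rays_disjoint (Rs m) (Rs m').

Definition onray c (x : V) := exists t, Rs c t = x.
Definition avoid (l X : list V) := forall x, In x l -> ~ In x X.

Definition RtX (SS : nat -> Prop) a b (X : list V) :=
  exists l s s', is_dipath E l /\ nth_error l 0 = Some (Rs a s) /\
    lst l (Rs b s') /\ avoid l X /\ (forall x, inner l x -> forall c, SS c -> ~ onray c x).

Definition Rt (SS : nat -> Prop) a b := forall X : list V, RtX SS a b X.

Lemma onray_unique c c' z : c < k -> c' < k -> onray c z -> onray c' z -> c = c'.
Proof.
  intros Hc Hc' [t Ht] [t' Ht']. destruct (Nat.eq_dec c c'); auto.
  exfalso. apply (Hdisj c c' Hc Hc' n t t'). congruence.
Qed.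

Lemma ray_inj c s t : c < k -> Rs c s = Rs c t -> s = t.
Proof. intros Hc H. destruct (Hray c Hc) as [Hi _]. auto. Qed.

Lemma ray_bound c (X : list V) : c < k -> exists N, forall t, In (Rs c t) X -> t < N.
Proof.
  intros Hc. induction X as [|x X [N HN]].
  - exists 0. simpl. tauto.
  - destruct (classic (exists t0, Rs c t0 = x)) as [[t0 Ht0]|Hno].
    + exists (Nat.max N (S t0)). intros t [Ht|Ht].
      * subst x. apply ray_inj in Ht; auto. lia.
      * specialize (HN t Ht). lia.
    + exists N. intros t [Ht|Ht]; [exfalso; eauto|auto].
Qed.

Lemma prefix_in c t N : t < N -> In (Rs c t) (map (Rs c) (seq 0 N)).
Proof. intros H. apply in_map. apply in_seq. lia. Qed.

Lemma walk_RtX SS a b X :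
  (exists w s s', w <> [] /\ chain E w /\ nth_error w 0 = Some (Rs a s) /\
     lst w (Rs b s') /\ avoid w X /\
     (forall z c, In z w -> SS c -> onray c z -> z = Rs a s \/ z = Rs b s')) -> RtX SS a b X.
Proof.
  intros [w [s [s' [Hne [Hc [H0 [Hl [Hav Hon]]]]]]]].
  destruct (walk_to_path V E (length w) w (le_n _) Hc Hne) as [p [Hnd [Hcp [Hpne [Hhd [Hlast Hincl]]]]]].
  assert (Hp0 : nth_error p 0 = Some (Rs a s)).
  { destruct p; [congruence|]. destruct w; [congruence|]. simpl in *. congruence. }
  assert (Hpl : lst p (Rs b s')).
  { pose proof (lst_last p (Rs a s) Hpne) as HH. rewrite Hlast in HH.
    rewrite (lst_last_eq w (Rs b s')) in HH; auto. }
  exists p, s, s'. split; [split; [|split]; auto|]. split; [auto|]. split; [auto|]. split.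
  - intros z Hz. apply Hav. apply Hincl; auto.
  - intros z Hz c Sc Honc.
    destruct (inner_not_ends p z _ _ Hnd Hp0 Hpl Hz) as [N1 N2].
    destruct (Hon z c (Hincl z (inner_In p z Hz)) Sc Honc); auto.
Qed.

Lemma walk_Rt SS a b :
  (forall X, exists w s s', w <> [] /\ chain E w /\ nth_error w 0 = Some (Rs a s) /\
     lst w (Rs b s') /\ avoid w X /\
     (forall z c, In z w -> SS c -> onray c z -> z = Rs a s \/ z = Rs b s')) -> Rt SS a b.
Proof. intros H X. apply walk_RtX. apply H. Qed.

Lemma Rt_mono (SS SS' : nat -> Prop) a b : (forall c, SS' c -> SS c) -> Rt SS a b -> Rt SS' a b.
Proof.
  intros HS H X. destruct (H X) as [l [s [s' [H1 [H2 [H3 [H4 H5]]]]]]].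
  exists l, s, s'. split; [exact H1|split; [exact H2|split; [exact H3|split; [exact H4|]]]].
  intros x Hx c Sc. apply H5; auto.
Qed.

Lemma Rt_comp (SS : nat -> Prop) a b c :
  (forall c, SS c -> c < k) -> b < k -> ~ SS b -> Rt SS a b -> Rt SS b c -> Rt SS a c.
Proof.
  intros HS Hb HnSb H1 H2. apply walk_Rt. intros X.
  destruct (ray_bound b X Hb) as [N HN].
  destruct (H1 (X ++ map (Rs b) (seq 0 N))) as [p1 [s [s1 [[Hp1ne [_ Hp1c]] [Hp10 [Hp1l [Hp1av Hp1in]]]]]]].
  assert (Hs1 : N <= s1).
  { destruct (Nat.lt_ge_cases s1 N) as [Hlt|]; auto. exfalso.
    apply (Hp1av (Rs b s1)); [apply lst_In; auto|]. apply in_or_app. right. apply prefix_in; auto. }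
  destruct (H2 (X ++ p1 ++ map (Rs b) (seq 0 (S s1)))) as [p2 [s2 [s' [[Hp2ne [_ Hp2c]] [Hp20 [Hp2l [Hp2av Hp2in]]]]]]].
  assert (Hs2 : s1 < s2).
  { destruct (Nat.lt_ge_cases s1 s2) as [Hlt|Hge]; auto. exfalso.
    apply (Hp2av (Rs b s2)); [destruct p2; simpl in Hp20; [congruence|]; inversion Hp20; simpl; auto|].
    apply in_or_app. right. apply in_or_app. right. apply prefix_in; lia. }
  destruct p2 as [|y p2']; [congruence|]. simpl in Hp20. inversion Hp20; subst y.
  set (seg := map (Rs b) (seq (S s1) (s2 - s1))).
  assert (Hsegfull : Rs b s1 :: seg = map (Rs b) (seq s1 (S (s2 - s1)))) by reflexivity.
  assert (Hraysb := Hray b Hb). destruct Hraysb as [Hbinj Hbe].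
  assert (Hsegc : chain E (Rs b s1 :: seg ++ p2')).
  { change (Rs b s1 :: seg ++ p2') with ((Rs b s1 :: seg) ++ p2').
    apply chain_join with (y := Rs b s2); auto.
    - rewrite Hsegfull. apply chain_seq. intros; auto.
    - rewrite Hsegfull. replace s2 with (s1 + (s2 - s1)) at 2 by lia. apply lst_seq. }
  assert (Hsegne : seg <> []).
  { unfold seg. destruct (s2 - s1) eqn:Hd; [lia|]. simpl. congruence. }
  assert (Hseglst : lst seg (Rs b s2)).
  { change seg with (tl (Rs b s1 :: seg)). rewrite Hsegfull.
    assert (Hl := lst_seq (Rs b) s1 (s2 - s1)). replace (s1 + (s2 - s1)) with s2 in Hl by lia.
    simpl. simpl in Hl. change (Rs b s1 :: map (Rs b) (seq (S s1) (s2 - s1))) with ([Rs b s1] ++ map (Rs b) (seq (S s1) (s2 - s1))) in Hl.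
    eapply lst_app_inv; eauto. }
  assert (Hsegin : forall z, In z seg -> exists t, s1 < t <= s2 /\ z = Rs b t).
  { intros z Hz. unfold seg in Hz. apply in_map_iff in Hz. destruct Hz as [t [<- Ht]].
    apply in_seq in Ht. exists t. split; [lia|auto]. }
  exists (p1 ++ seg ++ p2'), s, s'. split; [|split; [|split; [|split; [|split]]]].
  - destruct p1; simpl; congruence.
  - apply chain_join with (y := Rs b s1); auto.
  - apply nth0_app; auto.
  - apply lst_join with (z := Rs b s1); auto.
    change (Rs b s1 :: seg ++ p2') with ((Rs b s1 :: seg) ++ p2').
    apply lst_join with (z := Rs b s2); auto. congruence. apply lst_cons; auto.
  - intros z Hz Hzx. apply in_app_or in Hz. destruct Hz as [Hz|Hz].
    + apply (Hp1av z Hz). apply in_or_app; auto.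
    + apply in_app_or in Hz. destruct Hz as [Hz|Hz].
      * destruct (Hsegin z Hz) as [t [Ht ->]]. specialize (HN t Hzx). lia.
      * apply (Hp2av z (or_intror Hz)). apply in_or_app; auto.
  - intros z c0 Hz Sc0 Hon. assert (Hc0 := HS c0 Sc0).
    assert (Hnotb : forall t, z = Rs b t -> False).
    { intros t ->. assert (c0 = b) by (apply (onray_unique c0 b (Rs b t)); auto; exists t; auto). subst; contradiction. }
    apply in_app_or in Hz. destruct Hz as [Hz|Hz].
    + destruct (in_split_pos p1 z Hz) as [Hz0|[Hzl|Hzi]].
      * left. congruence.
      * exfalso. apply (Hnotb s1). eapply lst_unique; eauto.
      * exfalso. apply (Hp1in z Hzi c0 Sc0 Hon).
    + apply in_app_or in Hz. destruct Hz as [Hz|Hz].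
      * exfalso. destruct (Hsegin z Hz) as [t [_ ->]]. apply (Hnotb t); auto.
      * destruct (in_split_pos (Rs b s2 :: p2') z (or_intror Hz)) as [Hz0|[Hzl|Hzi]].
        -- exfalso. simpl in Hz0. inversion Hz0. apply (Hnotb s2); auto.
        -- right. eapply lst_unique; eauto.
        -- exfalso. apply (Hp2in z Hzi c0 Sc0 Hon).
Qed.

End Rays.

Section G.
Variable G : nat -> nat -> Prop.

Definition fwalk a b d (f : nat -> nat) := f 0 = a /\ f d = b /\ forall i, i < d -> G (f i) (f (S i)).

Definition W0 (T : nat -> Prop) a b d := exists f, fwalk a b d f /\ forall i, 0 < i < d -> T (f i).

Definition Wk (T : nat -> Prop) a b := exists d, 0 < d /\ W0 T a b d.

Lemma W0_app T a b c d1 d2 : W0 T a b d1 -> W0 T b c d2 -> (0 < d1 -> 0 < d2 -> T b) -> W0 T a c (d1 + d2).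
Proof.
  intros [f [[F0 [Fd Fe]] FT]] [g [[G0 [Gd Ge]] GT]] Hb.
  exists (fun i => if i <=? d1 then f i else g (i - d1)). split; [split; [|split]|].
  - simpl. auto.
  - destruct (Nat.leb_spec (d1 + d2) d1).
    + assert (d2 = 0) by lia. subst. rewrite Nat.add_0_r. congruence.
    + replace (d1 + d2 - d1) with d2 by lia. auto.
  - intros i Hi. destruct (Nat.leb_spec i d1); destruct (Nat.leb_spec (S i) d1).
    + apply Fe; lia.
    + assert (i = d1) by lia. subst i. replace (S d1 - d1) with 1 by lia.
      rewrite Fd, <- G0. apply Ge. lia.
    + lia.
    + replace (S i - d1) with (S (i - d1)) by lia. apply Ge. lia.
  - intros i Hi. destruct (Nat.leb_spec i d1).
    + destruct (Nat.eq_dec i d1).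
      * subst i. rewrite Fd. apply Hb; lia.
      * apply FT; lia.
    + apply GT; lia.
Qed.

Lemma W0_arc T a b : G a b -> W0 T a b 1.
Proof.
  intros H. exists (fun i => if i =? 0 then a else b). split; [split; [|split]|]; simpl; auto.
  - intros i Hi. assert (i = 0) by lia. subst. simpl. auto.
  - intros i Hi. lia.
Qed.

Lemma W0_refl T a : W0 T a a 0.
Proof. exists (fun _ => a). split; [split; [|split]|]; auto; intros; lia. Qed.

Lemma Wk_arc T a b : G a b -> Wk T a b.
Proof. intros H. exists 1. split; [lia|]. apply W0_arc; auto. Qed.

Lemma Wk_app T a b c : Wk T a b -> Wk T b c -> T b -> Wk T a c.
Proof.
  intros [d1 [H1 W1]] [d2 [H2 W2]] Hb. exists (d1 + d2). split; [lia|].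
  apply W0_app with b; auto.
Qed.

Lemma W0_mono (T T' : nat -> Prop) a b d : (forall z, T z -> T' z) -> W0 T a b d -> W0 T' a b d.
Proof. intros HT [f [Hf HfT]]. exists f. split; auto. Qed.

Lemma Wk_mono (T T' : nat -> Prop) a b : (forall z, T z -> T' z) -> Wk T a b -> Wk T' a b.
Proof. intros HT [d [Hd HW]]. exists d. split; auto. eapply W0_mono; eauto. Qed.

End G.

Section Lists.
Context {V : Type} {E : V -> V -> Prop}.

Lemma first_split (P : V -> Prop) l y : In y l -> P y ->
  exists l1 z l2, l = l1 ++ z :: l2 /\ P z /\ forall w, In w l1 -> ~ P w.
Proof.
  induction l as [|x l IH]; intros Hy Py; [destruct Hy|].
  destruct (classic (P x)) as [Px|Npx].
  - exists [], x, l. simpl. auto.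
  - destruct Hy as [->|Hy]; [contradiction|].
    destruct (IH Hy Py) as [l1 [z [l2 [-> [Pz Hl1]]]]].
    exists (x :: l1), z, l2. split; [reflexivity|]. split; auto.
    intros w [<-|Hw]; auto.
Qed.

Lemma glue p1 q p2 x y z w :
  chain E p1 -> nth_error p1 0 = Some x -> lst p1 y ->
  chain E q -> nth_error q 0 = Some y -> lst q z ->
  chain E p2 -> nth_error p2 0 = Some z -> lst p2 w ->
  chain E (p1 ++ tl q ++ tl p2) /\ nth_error (p1 ++ tl q ++ tl p2) 0 = Some x /\
  lst (p1 ++ tl q ++ tl p2) w /\
  (forall v, In v (p1 ++ tl q ++ tl p2) -> In v p1 \/ In v q \/ In v p2).
Proof.
  intros Hc1 H10 H1l Hcq Hq0 Hql Hc2 H20 H2l.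
  destruct q as [|y' q']; [discriminate|]. simpl in Hq0. inversion Hq0; subst y'.
  destruct p2 as [|z' p2']; [discriminate|]. simpl in H20. inversion H20; subst z'.
  assert (Hp1ne : p1 <> []) by (destruct p1; simpl in H10; congruence).
  simpl. split; [|split; [|split]].
  - apply chain_join with y; auto. change (y :: q' ++ p2') with ((y :: q') ++ p2').
    apply chain_join with z; auto.
  - apply nth0_app; auto.
  - apply lst_join with y; auto. change (y :: q' ++ p2') with ((y :: q') ++ p2').
    apply lst_join with z; auto. congruence.
  - intros v Hv. apply in_app_or in Hv. destruct Hv as [Hv|Hv]; auto.
    apply in_app_or in Hv. destruct Hv as [Hv|Hv]; simpl; auto.
Qed.

Lemma bound_inj (f : nat -> V) (X : list V) : (forall s t, f s = f t -> s = t) ->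
  exists N, forall t, In (f t) X -> t < N.
Proof.
  intros Hinj. induction X as [|x X [N HN]].
  - exists 0. simpl. tauto.
  - destruct (classic (exists t0, f t0 = x)) as [[t0 Ht0]|Hno].
    + exists (Nat.max N (S t0)). intros t [Ht|Ht].
      * subst x. apply Hinj in Ht. lia.
      * specialize (HN t Ht). lia.
    + exists N. intros t [Ht|Ht]; [exfalso; eauto|auto].
Qed.

Lemma disj_avoid (P : nat -> list V) : (forall m m', m <> m' -> vdisjoint (P m) (P m')) ->
  forall X N, exists m, N <= m /\ avoid (P m) X.
Proof.
  intros HP X. induction X as [|x X IH]; intros N.
  - exists N. split; auto. intros z _ [].
  - destruct (IH N) as [m1 [Hm1 Hav1]].
    destruct (classic (In x (P m1))) as [Hx|Hx].
    + destruct (IH (S m1)) as [m2 [Hm2 Hav2]]. exists m2. split; [lia|].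
      intros z Hz [<-|Hz2].
      * apply (HP m1 m2 ltac:(lia) x Hx Hz).
      * apply (Hav2 z Hz Hz2).
    + exists m1. split; auto. intros z Hz [<-|Hz2]; auto. apply (Hav1 z Hz Hz2).
Qed.

Lemma chain_seq_rev (f : nat -> V) a m : (forall t, a <= t < a + m -> E (f (S t)) (f t)) ->
  chain E (map (fun i => f (a + m - i)) (seq 0 (S m))).
Proof.
  intros Hf. apply chain_seq. intros t Ht.
  replace (a + m - t) with (S (a + m - S t)) by lia. apply Hf. lia.
Qed.

Lemma lst_map_seq0 (g : nat -> V) m : lst (map g (seq 0 (S m))) (g m).
Proof. pose proof (lst_seq g 0 m). simpl in H. exact H. Qed.

End Lists.

Section SC.
Context {V : Type} {E : V -> V -> Prop}.
Variable k : nat.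
Variable Rs : nat -> nat -> V.
Hypothesis Hray : forall m, m < k -> is_ray E (Rs m).
Hypothesis Hdisj : forall m m', m < k -> m' < k -> m <> m' -> rays_disjoint (Rs m) (Rs m').
Local Notation onr := (onray Rs).

Lemma list_ivt (R : nat -> Prop) : forall n (l : list V) x y, length l <= n ->
  nth_error l 0 = Some x -> (exists c, c < k /\ R c /\ onr c x) ->
  lst l y -> (exists d, d < k /\ ~ R d /\ onr d y) ->
  exists l1 x' mid y' l2 c d, l = l1 ++ x' :: mid ++ y' :: l2 /\ c < k /\ R c /\ onr c x' /\
    d < k /\ ~ R d /\ onr d y' /\ forall z, In z mid -> forall e, e < k -> ~ onr e z.
Proof.
  induction n as [|n IH]; intros l x y Hlen H0 [c [Hc [Rc Hx]]] Hl [d [Hd [Rd Hy]]].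
  - destruct l; simpl in *; [discriminate|lia].
  - destruct l as [|x0 t]; [discriminate|]. simpl in H0. inversion H0; subst x0.
    destruct t as [|t0 t'].
    + apply (proj1 (lst_single x y)) in Hl. subst y.
      assert (c = d) by (apply (onray_unique k Rs Hdisj c d x); auto). subst. contradiction.
    + assert (Hlt : lst (t0 :: t') y).
      { change (x :: t0 :: t') with ([x] ++ t0 :: t') in Hl. eapply lst_app_inv; eauto. congruence. }
      destruct (first_split (fun z => exists e, e < k /\ onr e z) (t0 :: t') y (lst_In _ _ Hlt)) as [mid [y' [l2 [Ht [[e [He Hy']] Hmid]]]]].
      { exists d; auto. }
      rewrite Ht in *.
      destruct (classic (R e)) as [Re|Re].
      * assert (Hl2 : lst (y' :: l2) y).
        { change (x :: mid ++ y' :: l2) with ((x :: mid) ++ y' :: l2) in Hl. eapply lst_app_inv; eauto. congruence. }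
        destruct (IH (y' :: l2) y' y) as [l1 [x'' [mid' [y'' [l2' [c' [d' [Heq Hrest]]]]]]]]; auto.
        { simpl in Hlen. rewrite length_app in Hlen. simpl in Hlen |- *. lia. }
        { exists e; auto. }
        { exists d; auto. }
        exists (x :: mid ++ l1), x'', mid', y'', l2', c', d'. split; auto.
        rewrite Heq. simpl. rewrite <- app_assoc. reflexivity.
      * exists [], x, mid, y', l2, c, e. simpl. split; auto.
        repeat (split; auto). intros z Hz e0 He0 Hon. apply (Hmid z Hz). exists e0; auto.
Qed.

Lemma chain_mid (l1 : list V) x mid y l2 : chain E (l1 ++ x :: mid ++ y :: l2) -> chain E (x :: mid ++ [y]).
Proof.
  intros H. replace (l1 ++ x :: mid ++ y :: l2) with (l1 ++ (x :: mid ++ [y]) ++ l2) in H.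
  - apply chain_app_r in H. apply chain_app_l in H. auto.
  - simpl. rewrite <- app_assoc. reflexivity.
Qed.

Lemma in_mid (l1 : list V) x mid y l2 z : In z (x :: mid ++ [y]) -> In z (l1 ++ x :: mid ++ y :: l2).
Proof. intros H. apply in_or_app. right. simpl in *. rewrite in_app_iff in *. simpl in *. tauto. Qed.

Lemma lst_snoc (l : list V) y : lst (l ++ [y]) y.
Proof. pose proof (lst_last (l ++ [y]) y). rewrite last_last in H. apply H. destruct l; simpl; congruence. Qed.

Lemma ab_ends (A B : V -> Prop) p : AB_dipath E A B p ->
  exists x y, nth_error p 0 = Some x /\ A x /\ lst p y /\ B y /\ chain E p /\ p <> [].
Proof.
  intros [[Hne [Hnd Hc]] HAB]. destruct p as [|x p']; [congruence|].
  exists x, (last (x :: p') x). assert (Hl := lst_last (x :: p') x Hne).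
  split; [reflexivity|]. split; [apply (proj1 (HAB 0 x eq_refl)); auto|].
  split; auto. split; auto. apply (proj2 (HAB _ _ Hl)). simpl. lia.
Qed.

Variable r0 : nat -> V.
Hypothesis Hr0 : raylike E r0.
Hypothesis Hle : forall a, a < k -> ray_le E (Rs a) r0 /\ ray_le E r0 (Rs a).

Definition Allk := fun c => c < k.
Definition Hg a b := a < k /\ b < k /\ @Rt V E Rs Allk a b.

Theorem strong_conn a b : a < k -> b < k -> a <> b -> Wk Hg (fun _ => True) a b.
Proof.
  intros Ha Hb Hab. apply NNPP. intros Hno.
  set (R := fun c => c = a \/ Wk Hg (fun _ => True) a c).
  assert (HRb : ~ R b) by (intros [->|HH]; auto).
  assert (Hclos : forall c d, R c -> Hg c d -> R d).
  { intros c d [->|Hc] Hcd; right.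
    - apply Wk_arc; auto.
    - apply Wk_app with c; auto. apply Wk_arc; auto. }
  set (Wf := fun c d => epsilon (inhabits (@nil V)) (fun X => ~ RtX (E:=E) Rs Allk c d X)).
  assert (HW : forall c d, c < k -> d < k -> R c -> ~ R d -> ~ RtX (E:=E) Rs Allk c d (Wf c d)).
  { intros c d Hc Hd Rc Rd. assert (Hn : ~ Rt (E:=E) Rs Allk c d).
    { intros HH. apply Rd. apply (Hclos c); auto. split; auto. }
    apply not_all_ex_not in Hn. unfold Wf. apply (epsilon_spec (inhabits (@nil V)) (fun X => ~ RtX (E:=E) Rs Allk c d X)). exact Hn. }
  set (X0 := flat_map (fun c => flat_map (fun d => Wf c d) (seq 0 k)) (seq 0 k)).
  assert (HX0 : forall c d z, c < k -> d < k -> In z (Wf c d) -> In z X0).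
  { intros c d z Hc Hd Hz. unfold X0. apply in_flat_map. exists c. split; [apply in_seq; lia|].
    apply in_flat_map. exists d. split; [apply in_seq; lia|auto]. }
  assert (Key : forall L x y, chain E L -> nth_error L 0 = Some x -> onr a x -> lst L y -> onr b y -> avoid L X0 -> False).
  { intros L x y HL HL0 Hx HLl Hy Hav.
    destruct (list_ivt R (length L) L x y (le_n _) HL0) as [l1 [x' [mid [y' [l2 [c [d [HLeq [Hc [Rc [Hx' [Hd [Rd [Hy' Hmid]]]]]]]]]]]]]]; auto.
    { exists a. split; auto. split; auto. left; auto. }
    { exists b; auto. }
    apply (HW c d Hc Hd Rc Rd). apply walk_RtX.
    destruct Hx' as [s Hs]. destruct Hy' as [s' Hs'].
    exists (x' :: mid ++ [y']), s, s'. split; [congruence|]. split.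
    { rewrite HLeq in HL. eapply chain_mid; eauto. }
    split; [simpl; congruence|]. split.
    { change (x' :: mid ++ [y']) with ((x' :: mid) ++ [y']). rewrite <- Hs'. rewrite Hs'. apply lst_snoc. }
    split.
    { intros z Hz HzW. apply (Hav z).
      - rewrite HLeq. apply in_mid; auto.
      - apply (HX0 c d z Hc Hd HzW). }
    intros z e Hz He Hon. simpl in Hz. destruct Hz as [Hz|Hz]; [left; congruence|].
    apply in_app_or in Hz. destruct Hz as [Hz|[Hz|[]]].
    - exfalso. apply (Hmid z Hz e He Hon).
    - right. congruence. }
  destruct Hr0 as [[Hinj Hedge]|[Hinj Hedge]].
  -
    destruct (bound_inj r0 X0 Hinj) as [N HN].
    destruct (Hle a Ha) as [[Pa [HPa HPad]] _].
    destruct (disj_avoid Pa HPad (X0 ++ map r0 (seq 0 N)) 0) as [m1 [_ Hav1]].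
    destruct (ab_ends _ _ _ (HPa m1)) as [x1 [y1 [H10 [Hx1 [H1l [[e1 He1] [Hc1 Hne1]]]]]]].
    assert (Hle1 : N <= e1).
    { destruct (Nat.lt_ge_cases e1 N); auto. exfalso. apply (Hav1 y1 (lst_In _ _ H1l)).
      apply in_or_app. right. rewrite <- He1. apply in_map. apply in_seq. lia. }
    destruct (Hle b Hb) as [_ [Pb [HPb HPbd]]].
    destruct (disj_avoid Pb HPbd (X0 ++ map r0 (seq 0 (S e1))) 0) as [m2 [_ Hav2]].
    destruct (ab_ends _ _ _ (HPb m2)) as [x2 [y2 [H20 [[s2 Hs2] [H2l [Hy2 [Hc2 Hne2]]]]]]].
    assert (Hlt2 : e1 < s2).
    { destruct (Nat.lt_ge_cases e1 s2); auto. exfalso. apply (Hav2 x2 (nth_error_In _ _ H20)).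
      apply in_or_app. right. rewrite <- Hs2. apply in_map. apply in_seq. lia. }
    set (q := map r0 (seq e1 (S (s2 - e1)))).
    assert (Hqc : chain E q) by (apply chain_seq; intros; auto).
    assert (Hq0 : nth_error q 0 = Some y1) by (unfold q; simpl; congruence).
    assert (Hql : lst q x2).
    { unfold q. rewrite <- Hs2. replace s2 with (e1 + (s2 - e1)) at 2 by lia. apply lst_seq. }
    destruct (glue (E:=E) (Pa m1) q (Pb m2) x1 y1 x2 y2) as [HLc [HL0 [HLl HLin]]]; auto.
    apply (Key _ x1 y2 HLc HL0 Hx1 HLl Hy2).
    intros v Hv HvX. destruct (HLin v Hv) as [Hv1|[Hvq|Hv2]].
    + apply (Hav1 v Hv1). apply in_or_app; auto.
    + unfold q in Hvq. apply in_map_iff in Hvq. destruct Hvq as [t [<- Ht]]. apply in_seq in Ht.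
      specialize (HN t HvX). lia.
    + apply (Hav2 v Hv2). apply in_or_app; auto.
  -
    destruct (bound_inj r0 X0 Hinj) as [N HN].
    destruct (Hle b Hb) as [_ [Pb [HPb HPbd]]].
    destruct (disj_avoid Pb HPbd (X0 ++ map r0 (seq 0 N)) 0) as [m2 [_ Hav2]].
    destruct (ab_ends _ _ _ (HPb m2)) as [x2 [y2 [H20 [[s2 Hs2] [H2l [Hy2 [Hc2 Hne2]]]]]]].
    assert (Hle2 : N <= s2).
    { destruct (Nat.lt_ge_cases s2 N); auto. exfalso. apply (Hav2 x2 (nth_error_In _ _ H20)).
      apply in_or_app. right. rewrite <- Hs2. apply in_map. apply in_seq. lia. }
    destruct (Hle a Ha) as [[Pa [HPa HPad]] _].
    destruct (disj_avoid Pa HPad (X0 ++ map r0 (seq 0 (S s2))) 0) as [m1 [_ Hav1]].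
    destruct (ab_ends _ _ _ (HPa m1)) as [x1 [y1 [H10 [Hx1 [H1l [[e1 He1] [Hc1 Hne1]]]]]]].
    assert (Hlt1 : s2 < e1).
    { destruct (Nat.lt_ge_cases s2 e1); auto. exfalso. apply (Hav1 y1 (lst_In _ _ H1l)).
      apply in_or_app. right. rewrite <- He1. apply in_map. apply in_seq. lia. }
    set (m := e1 - s2).
    set (q := map (fun i => r0 (s2 + m - i)) (seq 0 (S m))).
    assert (Hqc : chain E q) by (apply chain_seq_rev; intros; auto).
    assert (Hq0 : nth_error q 0 = Some y1).
    { unfold q. simpl. rewrite <- He1. f_equal. f_equal. unfold m. lia. }
    assert (Hql : lst q x2).
    { unfold q. pose proof (lst_map_seq0 (fun i => r0 (s2 + m - i)) m) as HH. simpl in HH.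
      replace (s2 + m - m) with s2 in HH by lia. rewrite Hs2 in HH. exact HH. }
    destruct (glue (E:=E) (Pa m1) q (Pb m2) x1 y1 x2 y2) as [HLc [HL0 [HLl HLin]]]; auto.
    apply (Key _ x1 y2 HLc HL0 Hx1 HLl Hy2).
    intros v Hv HvX. destruct (HLin v Hv) as [Hv1|[Hvq|Hv2]].
    + apply (Hav1 v Hv1). apply in_or_app; auto.
    + unfold q in Hvq. apply in_map_iff in Hvq. destruct Hvq as [t [<- Ht]]. apply in_seq in Ht.
      specialize (HN _ HvX). lia.
    + apply (Hav2 v Hv2). apply in_or_app; auto.
Qed.

End SC.

Lemma Rt_of_walk {V : Type} {E : V -> V -> Prop} k (Rs : nat -> nat -> V)
  (Hray : forall m, m < k -> is_ray E (Rs m))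
  (Hdisj : forall m m', m < k -> m' < k -> m <> m' -> rays_disjoint (Rs m) (Rs m'))
  (SS : nat -> Prop) (HS : forall c, SS c -> c < k) a b :
  Wk (Hg (E:=E) k Rs) (fun z => ~ SS z) a b -> @Rt V E Rs SS a b.
Proof.
  intros [d [Hd [f [[F0 [Fd Fe]] FT]]]]. subst a b.
  revert f Fe FT. induction d as [|d IH]; intros f Fe FT; [lia|].
  destruct (Nat.eq_dec d 0) as [->|Hd0].
  - destruct (Fe 0 ltac:(lia)) as [_ [_ HR]]. apply (Rt_mono Rs (Allk k)); auto.
  - apply (Rt_comp k Rs Hray Hdisj SS (f 0) (f 1) (f (S d))); auto.
    + destruct (Fe 0 ltac:(lia)) as [_ [HH _]]. auto.
    + apply FT. lia.
    + destruct (Fe 0 ltac:(lia)) as [_ [_ HR]]. apply (Rt_mono Rs (Allk k)); auto.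
    + apply (IH ltac:(lia) (fun i => f (S i))).
      * intros i Hi. apply Fe. lia.
      * intros i Hi. apply FT. lia.
Qed.

Lemma first_idx (P : nat -> Prop) e : P e -> exists q, q <= e /\ P q /\ forall t, t < q -> ~ P t.
Proof.
  induction e as [e IH] using (well_founded_induction lt_wf). intros He.
  destruct (classic (exists t, t < e /\ P t)) as [[t [Ht Pt]]|Hno].
  - destruct (IH t Ht Pt) as [q [Hq [Pq Hmin]]]. exists q. split; [lia|]. auto.
  - exists e. split; auto. split; auto. intros t Ht Pt. apply Hno. eauto.
Qed.

Lemma last_idx (P : nat -> Prop) q : P 0 -> exists p, p <= q /\ P p /\ forall t, p < t <= q -> ~ P t.
Proof.
  intros H0. induction q as [|q IH].
  - exists 0. split; auto. split; auto. intros; lia.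
  - destruct (classic (P (S q))) as [Pq|Npq].
    + exists (S q). split; auto. split; auto. intros; lia.
    + destruct IH as [p [Hp [Pp Hmax]]]. exists p. split; [lia|]. split; auto.
      intros t Ht. destruct (Nat.eq_dec t (S q)); [subst; auto|]. apply Hmax. lia.
Qed.

Section G2.
Variable G : nat -> nat -> Prop.
Definition Grev a b := G b a.

Lemma W0_shift T a b d f p q : fwalk G a b d f -> p <= q <= d ->
  (forall i, p < i < q -> T (f i)) -> W0 G T (f p) (f q) (q - p).
Proof.
  intros [F0 [Fd Fe]] Hpq HT. exists (fun t => f (p + t)). split; [split; [|split]|].
  - f_equal; lia.
  - f_equal; lia.
  - intros i Hi. replace (p + S i) with (S (p + i)) by lia. apply Fe. lia.
  - intros i Hi. apply HT. lia.
Qed.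

Lemma W0_rev T a b d : W0 Grev T a b d -> W0 G T b a d.
Proof.
  intros [f [[F0 [Fd Fe]] FT]]. exists (fun t => f (d - t)). split; [split; [|split]|].
  - rewrite Nat.sub_0_r. auto.
  - rewrite Nat.sub_diag. auto.
  - intros i Hi. specialize (Fe (d - S i) ltac:(lia)). unfold Grev in Fe.
    replace (S (d - S i)) with (d - i) in Fe by lia. exact Fe.
  - intros i Hi. apply FT. lia.
Qed.

Lemma Wk_rev T a b : Wk Grev T a b -> Wk G T b a.
Proof. intros [d [Hd HW]]. exists d. split; auto. apply W0_rev; auto. Qed.

Lemma shortcut T T' a b d : W0 G T a b d -> 0 < d -> a <> b ->
  (forall z, T z -> z <> a -> T' z) -> Wk G T' a b.
Proof.
  intros [f [[F0 [Fd Fe]] FT]] Hd Hab HT.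
  destruct (last_idx (fun t => f t = a) (d - 1)) as [p [Hp [Pp Hmax]]]; auto.
  exists (d - p). split; [lia|].
  rewrite <- Pp, <- Fd. apply (W0_shift T' a b d f p d); [split; auto|lia|].
  intros i Hi. apply HT; [apply FT; lia|]. apply Hmax. lia.
Qed.

End G2.

Lemma Grev_rev G : Grev (Grev G) = G.
Proof. reflexivity. Qed.

Definition Qs n (q : nat -> nat) z := exists i, 1 <= i <= n /\ z = q i.
Definition nQ n q := fun z => ~ Qs n q z.
Definition HexP G n q := forall i, 1 <= i -> i < n ->
  Wk G (nQ n q) (q i) (q (S i)) /\ Wk G (nQ n q) (q (S i)) (q i).
Definition CircP G n q := (forall i, 1 <= i -> i < n -> Wk G (nQ n q) (q i) (q (S i))) /\
  Wk G (nQ n q) (q n) (q 1).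
Definition GoodQ n k (q : nat -> nat) := (forall i, 1 <= i <= n -> q i < k) /\
  (forall i j, 1 <= i <= n -> 1 <= j <= n -> q i = q j -> i = j).

Section LP.
Variable G : nat -> nat -> Prop.
Variable k : nat.
Hypothesis HG : forall a b, G a b -> a < k /\ b < k.
Hypothesis Hsc : forall a b, a < k -> b < k -> a <> b -> Wk G (fun _ => True) a b.
Variable n : nat.
Hypothesis Hn : 2 <= n.
Variable v : nat -> nat.
Variable D : nat.
Hypothesis HvG : forall i, i < D -> G (v i) (v (S i)).
Hypothesis Hvinj : forall i j, i <= D -> j <= D -> v i = v j -> i = j.
Hypothesis HD : n * n <= D.

Definition Marked z := exists i, i <= D /\ z = v i.

Lemma v_lt j : j <= D -> v j < k.
Proof.
  intros Hj. destruct (Nat.eq_dec j D) as [->|Hne].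
  - assert (HD1 : D - 1 < D) by nia. specialize (HvG _ HD1). replace (S (D - 1)) with D in HvG by nia.
    apply HG in HvG. tauto.
  - apply (HG _ _ (HvG j ltac:(lia))).
Qed.

Lemma vwalk a b : a <= b <= D -> W0 G (fun z => exists i, a < i < b /\ z = v i) (v a) (v b) (b - a).
Proof.
  intros Hab. apply (W0_shift G _ (v 0) (v D) D v a b); [split; [auto|split; auto]|lia|].
  intros i Hi. exists i. split; auto.
Qed.

Lemma cut m : 1 <= m <= D -> exists x y d, m <= x <= D /\ y < m /\ 0 < d /\
  W0 G (fun z => ~ Marked z) (v x) (v y) d.
Proof.
  intros Hm.
  assert (HvD : v D < k) by (apply v_lt; auto).
  assert (Hv0 : v 0 < k) by (apply v_lt; lia).
  assert (Hne : v D <> v 0) by (intros HH; apply Hvinj in HH; lia).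
  destruct (Hsc _ _ HvD Hv0 Hne) as [d0 [Hd0 [f [[F0 [Fd Fe]] _]]]].
  destruct (first_idx (fun t => exists i, i < m /\ f t = v i) d0) as [q [Hq [[y [Hy Hfy]] Hmin]]].
  { exists 0. split; [lia|auto]. }
  assert (Hq0 : 0 < q).
  { destruct q; [|lia]. rewrite F0 in Hfy. apply Hvinj in Hfy; lia. }
  destruct (last_idx (fun t => Marked (f t)) (q - 1)) as [p [Hp [[x [Hx Hfx]] Hmax]]].
  { exists D. split; auto. }
  assert (Hxm : m <= x).
  { destruct (Nat.lt_ge_cases x m); auto. exfalso. apply (Hmin p); [lia|]. exists x; auto. }
  exists x, y, (q - p). split; [lia|]. split; auto. split; [lia|].
  rewrite <- Hfx, <- Hfy. apply (W0_shift G _ (v D) (v 0) d0 f p q); [split; auto|lia|].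
  intros i Hi. apply Hmax. lia.
Qed.

Lemma Q_lt q : (forall i, 1 <= i <= n -> Marked (q i)) -> forall z, Qs n q z -> Marked z.
Proof. intros H z [i [Hi ->]]. auto. Qed.

Theorem LP : exists q, GoodQ n k q /\ (HexP G n q \/ CircP G n q).
Proof.
  destruct (classic (exists m x y d, 1 <= m <= D /\ m <= x <= D /\ y < m /\ 0 < d /\
     W0 G (fun z => ~ Marked z) (v x) (v y) d /\ y + n - 1 <= x)) as [Hbig|Hsmall].
  - destruct Hbig as [m [x [y [d [Hm [Hx [Hy [Hd [HW Hxy]]]]]]]]].
    set (q := fun i => v (y + i - 1)).
    assert (HQ : forall j, j <= D -> Qs n q (v j) -> y <= j <= y + n - 1).
    { intros j Hj [i [Hi Hvi]]. unfold q in Hvi. apply Hvinj in Hvi; lia. }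
    assert (Hunm : forall z, ~ Marked z -> nQ n q z).
    { intros z Hz [i [Hi ->]]. apply Hz. exists (y + i - 1). split; [lia|auto]. }
    exists q. split; [split|].
    + intros i Hi. apply v_lt. lia.
    + intros i j Hi Hj HH. apply Hvinj in HH; lia.
    + right. split.
      * intros i Hi1 Hi2. apply Wk_arc. unfold q. replace (y + S i - 1) with (S (y + i - 1)) by lia.
        apply HvG. lia.
      * exists ((x - (y + n - 1)) + d). split; [lia|].
        apply W0_app with (v x).
        -- change (q n) with (v (y + n - 1)).
           eapply W0_mono; [|exact (vwalk (y + n - 1) x ltac:(lia))].
           intros z [i [Hi ->]] HQz. apply HQ in HQz; lia.
        -- replace (q 1) with (v y) by (unfold q; f_equal; lia).
           apply (W0_mono G _ _ _ _ _ Hunm HW).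
        -- intros H1 _ HQx. apply HQ in HQx; lia.
  - assert (Hs : forall m x y d, 1 <= m <= D -> m <= x <= D -> y < m -> 0 < d ->
       W0 G (fun z => ~ Marked z) (v x) (v y) d -> x < y + n - 1).
    { intros m x y d H1 H2 H3 H4 H5. destruct (Nat.lt_ge_cases x (y + n - 1)); auto.
      exfalso. apply Hsmall. exists m, x, y, d. auto 10. }
    set (A := fun t hi z => ~ Marked z \/ exists i, i <= D /\ z = v i /\ t + 3 <= i + n /\ i + 3 <= hi + n /\ i <> t).
    assert (Desc : forall t hi, t < hi -> hi <= D -> forall y, t < y <= hi ->
      exists d, 0 < d /\ W0 G (A t hi) (v y) (v t) d).
    { intros t hi Ht Hhi y. induction y as [y IH] using (well_founded_induction lt_wf). intros Hy.
      destruct (cut y ltac:(lia)) as [x [y' [dj [Hx [Hy' [Hdj HJ]]]]]].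
      assert (Hsm := Hs y x y' dj ltac:(lia) Hx Hy' Hdj HJ).
      assert (P1 : W0 G (A t hi) (v y) (v x) (x - y)).
      { eapply W0_mono; [|exact (vwalk y x ltac:(lia))]. intros z [i [Hi ->]]. right. exists i.
        split; [lia|]. split; [reflexivity|]. lia. }
      assert (P2 : W0 G (A t hi) (v x) (v y') dj).
      { eapply W0_mono; [|exact HJ]. intros z Hz. left. auto. }
      assert (Hxin : A t hi (v x)).
      { right. exists x. split; [lia|]. split; [reflexivity|]. lia. }
      destruct (Nat.le_gt_cases y' t) as [Hle|Hgt].
      - assert (P3 : W0 G (A t hi) (v y') (v t) (t - y')).
        { eapply W0_mono; [|exact (vwalk y' t ltac:(lia))]. intros z [i [Hi ->]]. right. exists i.
          split; [lia|]. split; [reflexivity|]. lia. }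
        exists ((x - y) + dj + (t - y')). split; [lia|].
        apply W0_app with (v y'); [apply W0_app with (v x); auto|auto|].
        intros _ H3. right. exists y'. split; [lia|]. split; [reflexivity|]. lia.
      - destruct (IH y' ltac:(lia) ltac:(lia)) as [d' [Hd' P3]].
        exists ((x - y) + dj + d'). split; [lia|].
        apply W0_app with (v y'); [apply W0_app with (v x); auto|auto|].
        intros _ _. right. exists y'. split; [lia|]. split; [reflexivity|]. lia. }
    set (q := fun l => v (l * n)).
    assert (HQ : forall j, j <= D -> Qs n q (v j) -> exists l, 1 <= l <= n /\ j = l * n).
    { intros j Hj [i [Hi Hvi]]. unfold q in Hvi. apply Hvinj in Hvi; [|auto|nia]. exists i. auto. }
    exists q. split; [split|].
    + intros i Hi. apply v_lt. nia.
    + intros i j Hi Hj HH. unfold q in HH. apply Hvinj in HH; [|nia|nia].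
      apply Nat.mul_cancel_r in HH; lia.
    + left. intros l Hl1 Hl2. split.
      * exists n. split; [lia|].
        assert (Hlen : S l * n - l * n = n) by nia.
        pose proof (vwalk (l * n) (S l * n) ltac:(nia)) as HW. rewrite Hlen in HW.
        change (q l) with (v (l * n)). change (q (S l)) with (v (S l * n)).
        eapply W0_mono; [|exact HW].
        intros z [i [Hi ->]] HQz. apply HQ in HQz; [|nia]. destruct HQz as [l' [Hl' ->]].
        assert (l < l') by nia. assert (l' < S l) by nia. lia.
      * destruct (Desc (l * n) (S l * n) ltac:(nia) ltac:(nia) (S l * n) ltac:(nia)) as [d [Hd HW]].
        apply (shortcut G _ _ _ _ d HW Hd).
        { intros HH. apply Hvinj in HH; nia. }
        intros z [Hz|[i [Hi [-> [H1 [H2 H3]]]]]] Hne.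
        -- intros HQz. apply Hz. destruct HQz as [i [Hi ->]]. exists (i * n). split; [nia|auto].
        -- intros HQz. apply HQ in HQz; [|auto]. destruct HQz as [l' [Hl' ->]].
           assert (l' <> l) by (intros ->; apply H3; reflexivity).
           assert (l' <> S l) by (intros ->; apply Hne; reflexivity).
           assert (l' < l \/ l' > S l) as [Hc|Hc] by lia; nia.
Qed.

End LP.

Lemma pigeon (key : nat -> nat) c : forall M L, NoDup L -> (forall x, In x L -> key x < M) ->
  M * c < length L -> exists v L', NoDup L' /\ c < length L' /\ forall x, In x L' -> In x L /\ key x = v.
Proof.
  induction M as [|M IH]; intros L Hnd HL Hlen.
  - destruct L as [|x L]; simpl in Hlen; [lia|]. specialize (HL x (or_introl eq_refl)). lia.
  - set (L1 := filter (fun x => key x =? M) L).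
    set (L2 := filter (fun x => negb (key x =? M)) L).
    assert (Hl : length L1 + length L2 = length L) by apply filter_length.
    destruct (Nat.lt_ge_cases c (length L1)) as [Hc|Hc].
    + exists M, L1. split; [apply NoDup_filter; auto|]. split; auto.
      intros x Hx. unfold L1 in Hx. apply filter_In in Hx. destruct Hx as [Hx Hk].
      apply Nat.eqb_eq in Hk. auto.
    + destruct (IH L2) as [v [L' [H1 [H2 H3]]]].
      * apply NoDup_filter; auto.
      * intros x Hx. unfold L2 in Hx. apply filter_In in Hx. destruct Hx as [Hx Hk].
        specialize (HL x Hx). destruct (Nat.eqb_spec (key x) M); simpl in Hk; [discriminate|lia].
      * simpl in Hlen. lia.
      * exists v, L'. split; auto. split; auto. intros x Hx. destruct (H3 x Hx) as [Hx1 Hx2].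
        split; auto. unfold L2 in Hx1. apply filter_In in Hx1. tauto.
Qed.

Section Dist.
Variable G : nat -> nat -> Prop.
Variable k : nat.
Hypothesis HG : forall a b, G a b -> a < k /\ b < k.
Hypothesis Hsc : forall a b, a < k -> b < k -> a <> b -> Wk G (fun _ => True) a b.

Definition Dmin a x d := W0 G (fun _ => True) a x d /\ forall d', W0 G (fun _ => True) a x d' -> d <= d'.
Definition dist x := epsilon (inhabits 0) (fun d => Dmin 0 x d).

Lemma dist_spec x : x < k -> Dmin 0 x (dist x).
Proof.
  intros Hx. unfold dist. apply epsilon_spec.
  assert (Hr : exists d, W0 G (fun _ => True) 0 x d).
  { destruct (Nat.eq_dec x 0) as [->|Hne].
    - exists 0. apply W0_refl.
    - destruct (Hsc 0 x ltac:(lia) Hx (not_eq_sym Hne)) as [d [_ HW]]. eauto. }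
  destruct Hr as [d Hd].
  destruct (first_idx (fun d => W0 G (fun _ => True) 0 x d) d Hd) as [q [_ [Hq Hmin]]].
  exists q. split; auto. intros d' Hd'. destruct (Nat.le_gt_cases q d'); auto.
  exfalso. apply (Hmin d'); auto.
Qed.

Lemma Dmin_unique a x d d' : Dmin a x d -> Dmin a x d' -> d = d'.
Proof. intros [H1 H2] [H3 H4]. specialize (H2 _ H3). specialize (H4 _ H1). lia. Qed.

Lemma Dmin_prefix a x d f : fwalk G a x d f -> (forall d', W0 G (fun _ => True) a x d' -> d <= d') ->
  forall i, i <= d -> Dmin a (f i) i.
Proof.
  intros Hf Hmin i Hi. destruct Hf as [F0 [Fd Fe]].
  assert (Hpre : W0 G (fun _ => True) a (f i) i).
  { pose proof (W0_shift G (fun _ => True) a x d f 0 i) as HH. rewrite F0, Nat.sub_0_r in HH.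
    apply HH; [split; auto|lia|auto]. }
  split; auto. intros d' Hd'.
  assert (Hsuf : W0 G (fun _ => True) (f i) x (d - i)).
  { pose proof (W0_shift G (fun _ => True) a x d f i d) as HH. rewrite Fd in HH.
    apply HH; [split; auto|lia|auto]. }
  assert (W0 G (fun _ => True) a x (d' + (d - i))) by (apply W0_app with (f i); auto).
  specialize (Hmin _ H). lia.
Qed.

Lemma dist_walk x : x < k -> exists f, fwalk G 0 x (dist x) f /\ (forall i, i <= dist x -> f i < k /\ dist (f i) = i).
Proof.
  intros Hx. destruct (dist_spec x Hx) as [[f [Hf _]] Hmin].
  exists f. split; auto. intros i Hi.
  assert (Hfk : f i < k).
  { destruct Hf as [F0 [Fd Fe]]. destruct (Nat.eq_dec i (dist x)) as [->|Hne]; [congruence|].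
    apply (HG _ _ (Fe i ltac:(lia))). }
  split; auto. apply (Dmin_unique 0 (f i)); [apply dist_spec; auto|].
  apply (Dmin_prefix 0 x (dist x) f); auto.
Qed.

Lemma dist_route x : x < k -> x <> 0 -> 0 < dist x /\ W0 G (fun z => dist z < dist x) 0 x (dist x).
Proof.
  intros Hx Hne. destruct (dist_walk x Hx) as [f [Hf Hd]].
  split.
  - destruct (dist x) eqn:E0; [|lia]. destruct Hf as [F0 [Fd _]]. congruence.
  - exists f. split; auto. intros i Hi. rewrite (proj2 (Hd i ltac:(lia))). lia.
Qed.

End Dist.

Definition Kc n := (n * n + 1) * (n * n + 1) * n + 2.

Lemma LP_apply G k n (HG : forall a b, G a b -> a < k /\ b < k)
  (Hsc : forall a b, a < k -> b < k -> a <> b -> Wk G (fun _ => True) a b) :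
  2 <= n -> (exists x, x < k /\ n * n + 1 <= dist G x) ->
  exists q, GoodQ n k q /\ (HexP G n q \/ CircP G n q).
Proof.
  intros Hn [x [Hx HDx]].
  destruct (dist_walk G k HG Hsc x Hx) as [f [[F0 [Fd Fe]] Hd]].
  apply (LP G k HG Hsc n Hn f (n * n + 1)).
  - intros i Hi. apply Fe. lia.
  - intros i j Hi Hj Hij. rewrite <- (proj2 (Hd i ltac:(lia))), <- (proj2 (Hd j ltac:(lia))). congruence.
  - lia.
Qed.

Lemma Qs_rev n q z : Qs n (fun i => q (n + 1 - i)) z <-> Qs n q z.
Proof.
  split; intros [i [Hi ->]]; exists (n + 1 - i); split; try lia; f_equal; lia.
Qed.

Lemma rev_conv G k n (q : nat -> nat) : GoodQ n k q -> (HexP (Grev G) n q \/ CircP (Grev G) n q) ->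
  exists q', GoodQ n k q' /\ (HexP G n q' \/ CircP G n q').
Proof.
  intros [Hk Hinj] [Hhex|[Hc1 Hc2]].
  - exists q. split; [split; auto|]. left. intros i H1 H2. destruct (Hhex i H1 H2) as [A B].
    split; apply (Wk_rev G); auto.
  - exists (fun i => q (n + 1 - i)). split; [split|].
    + intros i Hi. apply Hk. lia.
    + intros i j Hi Hj HH. apply Hinj in HH; lia.
    + right. split.
      * intros i H1 H2. apply (Wk_mono G (nQ n q)).
        { intros z Hz Hq. apply Hz. apply Qs_rev. auto. }
        apply (Wk_rev G). replace (n + 1 - i) with (S (n - i)) by lia.
        replace (n + 1 - S i) with (n - i) by lia. apply Hc1; lia.
      * apply (Wk_mono G (nQ n q)).
        { intros z Hz Hq. apply Hz. apply Qs_rev. auto. }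
        apply (Wk_rev G). replace (n + 1 - n) with 1 by lia. replace (n + 1 - 1) with n by lia. auto.
Qed.

Theorem comb G k n (HG : forall a b, G a b -> a < k /\ b < k)
  (Hsc : forall a b, a < k -> b < k -> a <> b -> Wk G (fun _ => True) a b) :
  2 <= n -> Kc n <= k -> exists q, GoodQ n k q /\ (HexP G n q \/ CircP G n q).
Proof.
  intros Hn HK. unfold Kc in HK. set (D := n * n + 1) in *.
  assert (HGr : forall a b, Grev G a b -> a < k /\ b < k) by (intros a b H; apply HG in H; tauto).
  assert (Hscr : forall a b, a < k -> b < k -> a <> b -> Wk (Grev G) (fun _ => True) a b).
  { intros a b Ha Hb Hab. apply (Wk_rev (Grev G)). apply Hsc; auto. }
  destruct (classic (exists x, x < k /\ D <= dist G x)) as [H1|H1].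
  { apply LP_apply; auto. }
  destruct (classic (exists x, x < k /\ D <= dist (Grev G) x)) as [H2|H2].
  { destruct (LP_apply (Grev G) k n HGr Hscr Hn H2) as [q [Hq Hpat]].
    apply (rev_conv G k n q Hq Hpat). }
  assert (Hd1 : forall x, x < k -> dist G x < D).
  { intros x Hx. destruct (Nat.lt_ge_cases (dist G x) D); auto. exfalso; eauto. }
  assert (Hd2 : forall x, x < k -> dist (Grev G) x < D).
  { intros x Hx. destruct (Nat.lt_ge_cases (dist (Grev G) x) D); auto. exfalso; eauto. }
  set (L0 := seq 1 (k - 1)).
  destruct (pigeon (dist G) (D * (n - 1)) D L0) as [v1 [L1 [HL1nd [HL1len HL1]]]].
  { apply seq_NoDup. }
  { intros x Hx. unfold L0 in Hx. apply in_seq in Hx. apply Hd1. lia. }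
  { unfold L0. rewrite length_seq. nia. }
  destruct (pigeon (dist (Grev G)) (n - 1) D L1) as [v2 [L2 [HL2nd [HL2len HL2]]]]; auto.
  { intros x Hx. destruct (HL1 x Hx) as [Hx0 _]. unfold L0 in Hx0. apply in_seq in Hx0. apply Hd2. lia. }
  set (q := fun i => nth (i - 1) L2 0).
  assert (Hqin : forall i, 1 <= i <= n -> In (q i) L2).
  { intros i Hi. apply nth_In. lia. }
  assert (Hqprop : forall i, 1 <= i <= n -> 1 <= q i < k /\ dist G (q i) = v1 /\ dist (Grev G) (q i) = v2).
  { intros i Hi. destruct (HL2 _ (Hqin i Hi)) as [Hx1 Hx2]. destruct (HL1 _ Hx1) as [Hx3 Hx4].
    unfold L0 in Hx3. apply in_seq in Hx3. split; [lia|]. auto. }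
  assert (Hroute : forall i j, 1 <= i <= n -> 1 <= j <= n -> Wk G (nQ n q) (q i) (q j)).
  { intros i j Hi Hj. destruct (Hqprop i Hi) as [Hik [_ Hiv]]. destruct (Hqprop j Hj) as [Hjk [Hjv _]].
    destruct (dist_route (Grev G) k HGr Hscr (q i) ltac:(lia) ltac:(lia)) as [Hpos1 W1].
    destruct (dist_route G k HG Hsc (q j) ltac:(lia) ltac:(lia)) as [Hpos2 W2].
    apply W0_rev in W1.
    exists (dist (Grev G) (q i) + dist G (q j)). split; [lia|].
    apply W0_app with 0.
    - eapply W0_mono; [|exact W1]. intros z Hz [l [Hl ->]]. destruct (Hqprop l Hl) as [_ [_ HH]]. lia.
    - eapply W0_mono; [|exact W2]. intros z Hz [l [Hl ->]]. destruct (Hqprop l Hl) as [_ [HH _]]. lia.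
    - intros _ _ [l [Hl HH]]. destruct (Hqprop l Hl) as [HH2 _]. lia. }
  exists q. split; [split|].
  - intros i Hi. apply Hqprop; auto.
  - intros i j Hi Hj HH. unfold q in HH. apply (NoDup_nth L2 0) in HH; auto; lia.
  - right. split.
    + intros i H1' H2'. apply Hroute; lia.
    + apply Hroute; lia.
Qed.

Section Constr.
Context {V : Type} {E : V -> V -> Prop}.
Variable k : nat.
Variable Rs : nat -> nat -> V.
Hypothesis Hray : forall m, m < k -> is_ray E (Rs m).
Hypothesis Hdisj : forall m m', m < k -> m' < k -> m <> m' -> rays_disjoint (Rs m) (Rs m').
Variable n : nat.
Variable q : nat -> nat.
Hypothesis Hqk : forall i, 1 <= i <= n -> q i < k.
Hypothesis Hqinj : forall i j, 1 <= i <= n -> 1 <= j <= n -> q i = q j -> i = j.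
Definition SSq c := exists i, 1 <= i <= n /\ c = q i.
Variable cross : nat -> option ((nat * nat) * (nat * nat)).
Variable sg : nat * nat -> nat.
Variable HE : nat * nat -> nat * nat -> Prop.
Hypothesis R1 : forall i j, 1 <= i <= n -> 1 <= j -> sg (i, j) < sg (i, S j).
Hypothesis R2 : forall s u v, cross s = Some (u, v) -> sg u = s /\ sg v = s /\ grid_vert n u /\
  grid_vert n v /\ fst u <> fst v /\ @Rt V E Rs SSq (q (fst u)) (q (fst v)).
Hypothesis R3 : forall u v, HE u v -> ray_edge n u v \/ cross (sg u) = Some (u, v).

Definition spec3 a b X (t : list V * nat * nat) : Prop :=
  is_dipath E (fst (fst t)) /\ nth_error (fst (fst t)) 0 = Some (Rs a (snd (fst t))) /\
  lst (fst (fst t)) (Rs b (snd t)) /\ avoid (fst (fst t)) X /\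
  (forall x, inner (fst (fst t)) x -> forall c, SSq c -> ~ onray Rs c x).

Definition choose a b X := epsilon (inhabits ([], 0, 0)) (spec3 a b X).

Lemma choose_spec a b X : RtX (E:=E) Rs SSq a b X -> spec3 a b X (choose a b X).
Proof.
  intros [l [s [s' H]]]. unfold choose. apply epsilon_spec. exists (l, s, s'). exact H.
Qed.

Definition prefixes p := flat_map (fun i => map (Rs (q i)) (seq 0 p)) (seq 1 n).

Lemma prefix_mem i t p : 1 <= i <= n -> t < p -> In (Rs (q i) t) (prefixes p).
Proof.
  intros Hi Ht. unfold prefixes. apply in_flat_map. exists i. split; [apply in_seq; lia|].
  apply in_map. apply in_seq. lia.
Qed.

Definition stepf s (st : nat * list V) : nat * list V :=
  match cross s with
  | Some (u, v) => let c := choose (q (fst u)) (q (fst v)) (snd st ++ prefixes (fst st)) in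
      (S (Nat.max (fst st) (Nat.max (snd (fst c)) (snd c))), snd st ++ fst (fst c))
  | None => (S (fst st), snd st)
  end.

Fixpoint state s := match s with 0 => (0, []) | S s' => stepf s' (state s') end.
Definition Pn s := fst (state s).
Definition Us s := snd (state s).
Definition Xs s := Us s ++ prefixes (Pn s).
Definition chs s := match cross s with
  | Some (u, v) => choose (q (fst u)) (q (fst v)) (Xs s) | None => ([], 0, 0) end.
Definition path s := fst (fst (chs s)).
Definition stp s := snd (fst (chs s)).
Definition enp s := snd (chs s).

Lemma state_S s : Pn (S s) = S (Nat.max (Pn s) (Nat.max (stp s) (enp s))) /\ Us (S s) = Us s ++ path s.
Proof.
  unfold Pn, Us, stp, enp, path, chs, Xs. simpl. unfold stepf.
  destruct (cross s) as [[u v]|]; simpl; auto.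
  split; [lia|]. rewrite app_nil_r. auto.
Qed.

Lemma cross_spec s u v : cross s = Some (u, v) -> spec3 (q (fst u)) (q (fst v)) (Xs s) (chs s).
Proof.
  intros Hc. unfold chs. rewrite Hc. apply choose_spec.
  destruct (R2 s u v Hc) as [_ [_ [_ [_ [_ HR]]]]]. apply HR.
Qed.

Definition eqp (w u : nat * nat) := (fst w =? fst u) && (snd w =? snd u).
Lemma eqp_spec w u : eqp w u = true <-> w = u.
Proof.
  destruct w as [a b], u as [c d]. unfold eqp. simpl. rewrite andb_true_iff, !Nat.eqb_eq.
  split; [intros [-> ->]; auto|intros H; inversion H; auto].
Qed.

Definition pos w := match cross (sg w) with
  | Some (u, v) => if eqp w u then stp (sg w) else if eqp w v then enp (sg w) else Pn (sg w)
  | None => Pn (sg w) end.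

Lemma Pn_S s : Pn s < Pn (S s).
Proof. rewrite (proj1 (state_S s)). lia. Qed.

Lemma Pn_mono s s' : s <= s' -> Pn s <= Pn s'.
Proof.
  intros H. induction H; auto. pose proof (Pn_S m). lia.
Qed.

Lemma st_ge s u v : cross s = Some (u, v) -> Pn s <= stp s /\ Pn s <= enp s.
Proof.
  intros Hc. destruct (cross_spec s u v Hc) as [Hd [H0 [Hl [Hav _]]]].
  destruct (R2 s u v Hc) as [_ [_ [[Hu _] [[Hv _] _]]]].
  fold (path s) in *. fold (stp s) in H0. fold (enp s) in Hl.
  split.
  - destruct (Nat.lt_ge_cases (stp s) (Pn s)) as [Hlt|]; auto. exfalso.
    apply (Hav _ (nth_error_In _ _ H0)). unfold Xs. apply in_or_app. right. apply prefix_mem; auto.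
  - destruct (Nat.lt_ge_cases (enp s) (Pn s)) as [Hlt|]; auto. exfalso.
    apply (Hav _ (lst_In _ _ Hl)). unfold Xs. apply in_or_app. right. apply prefix_mem; auto.
Qed.

Lemma pos_bounds w : Pn (sg w) <= pos w < Pn (S (sg w)).
Proof.
  rewrite (proj1 (state_S (sg w))). unfold pos.
  destruct (cross (sg w)) as [[u v]|] eqn:Hc; [|lia].
  destruct (st_ge _ _ _ Hc). destruct (eqp w u); [lia|]. destruct (eqp w v); lia.
Qed.

Lemma pos_step i j : 1 <= i <= n -> 1 <= j -> pos (i, j) < pos (i, S j).
Proof.
  intros Hi Hj. pose proof (pos_bounds (i, j)). pose proof (pos_bounds (i, S j)).
  pose proof (Pn_mono (S (sg (i, j))) (sg (i, S j)) (R1 i j Hi Hj)). lia.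
Qed.

Lemma pos_strict i j j' : 1 <= i <= n -> 1 <= j -> j < j' -> pos (i, j) < pos (i, j').
Proof.
  intros Hi Hj H. induction H.
  - apply pos_step; auto.
  - pose proof (pos_step i m Hi ltac:(lia)). lia.
Qed.

Lemma pos_le i j j' : 1 <= i <= n -> 1 <= j -> j <= j' -> pos (i, j) <= pos (i, j').
Proof.
  intros Hi Hj H. destruct (Nat.eq_dec j j') as [->|Hne]; [lia|].
  pose proof (pos_strict i j j' Hi Hj ltac:(lia)). lia.
Qed.

Lemma pos_cross s u v : cross s = Some (u, v) -> pos u = stp s /\ pos v = enp s.
Proof.
  intros Hc. destruct (R2 s u v Hc) as [Hu [Hv [_ [_ [Hne _]]]]].
  unfold pos. rewrite Hu, Hv, Hc.
  assert (eqp u u = true) by (apply eqp_spec; auto).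
  assert (eqp v u = false).
  { destruct (eqp v u) eqn:HH; auto. apply eqp_spec in HH. subst. contradiction. }
  assert (eqp v v = true) by (apply eqp_spec; auto).
  rewrite H, H0, H1. auto.
Qed.

Lemma Us_mono s s' : s <= s' -> incl (Us s) (Us s').
Proof.
  intros H. induction H; [apply incl_refl|].
  rewrite (proj2 (state_S m)). intros x Hx. apply in_or_app. left. auto.
Qed.

Lemma path_disj s s' u v u' v' x : s < s' -> cross s = Some (u, v) -> cross s' = Some (u', v') ->
  In x (path s) -> In x (path s') -> False.
Proof.
  intros Hlt Hc Hc' Hx Hx'.
  destruct (cross_spec s' u' v' Hc') as [_ [_ [_ [Hav _]]]].
  apply (Hav x Hx'). unfold Xs. apply in_or_app. left.
  apply (Us_mono (S s) s'); [lia|]. rewrite (proj2 (state_S s)). apply in_or_app. right. auto.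
Qed.


Definition phi (w : nat * nat) := Rs (q (fst w)) (pos w).
Definition seg (u v : nat * nat) := map (Rs (q (fst u))) (seq (pos u) (S (pos v - pos u))).
Definition Pp (u v : nat * nat) :=
  if (fst u =? fst v) && (snd v =? S (snd u)) then seg u v else path (sg u).

Lemma Pp_ray i j : Pp (i, j) (i, S j) = seg (i, j) (i, S j).
Proof. unfold Pp. simpl. rewrite !Nat.eqb_refl. reflexivity. Qed.

Lemma Pp_cross s u v : cross s = Some (u, v) -> Pp u v = path s.
Proof.
  intros Hc. destruct (R2 s u v Hc) as [Hu [_ [_ [_ [Hne _]]]]].
  unfold Pp. destruct (Nat.eqb_spec (fst u) (fst v)); [contradiction|]. simpl. rewrite Hu. auto.
Qed.

Lemma seg_in i j x : 1 <= i <= n -> 1 <= j -> In x (seg (i, j) (i, S j)) -> exists t, pos (i, j) <= t <= pos (i, S j) /\ x = Rs (q i) t.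
Proof.
  intros Hi Hj. pose proof (pos_step i j Hi Hj). unfold seg. intros Hx. simpl fst in Hx. apply in_map_iff in Hx. destruct Hx as [t [<- Ht]].
  apply in_seq in Ht. exists t. split; [lia|auto].
Qed.

Lemma seg_inner i j x : 1 <= i <= n -> 1 <= j -> inner (seg (i, j) (i, S j)) x ->
  exists t, pos (i, j) < t < pos (i, S j) /\ x = Rs (q i) t.
Proof.
  intros Hi Hj [i0 [H1 [H2 H3]]]. pose proof (pos_step i j Hi Hj).
  unfold seg in *. simpl fst in *. rewrite length_map, length_seq in H2.
  rewrite nth_error_map, nth_error_seq in H3. destruct (Nat.ltb_spec i0 (S (pos (i, S j) - pos (i, j)))); [|discriminate].
  simpl in H3. inversion H3. exists (pos (i, j) + i0). split; [lia|auto].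
Qed.

Lemma seg_path i j : 1 <= i <= n -> 1 <= j ->
  is_dipath E (seg (i, j) (i, S j)) /\ nth_error (seg (i, j) (i, S j)) 0 = Some (phi (i, j)) /\
  lst (seg (i, j) (i, S j)) (phi (i, S j)).
Proof.
  intros Hi Hj. pose proof (pos_step i j Hi Hj). destruct (Hray (q i) (Hqk i Hi)) as [Hinj He].
  unfold seg, phi. simpl fst. split; [split; [|split]|split].
  - simpl. congruence.
  - apply Injective_map_NoDup; [intros a b; apply Hinj|apply seq_NoDup].
  - apply chain_seq. intros; auto.
  - reflexivity.
  - pose proof (lst_seq (Rs (q i)) (pos (i, j)) (pos (i, S j) - pos (i, j))) as HH.
    replace (pos (i, j) + (pos (i, S j) - pos (i, j))) with (pos (i, S j)) in HH by lia. exact HH.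
Qed.

Lemma phi_on w : grid_vert n w -> SSq (q (fst w)) /\ onray Rs (q (fst w)) (phi w).
Proof. intros [Hw _]. split; [exists (fst w); split; auto|exists (pos w); auto]. Qed.

Lemma phi_eq_ray i t w : 1 <= i <= n -> grid_vert n w -> Rs (q i) t = phi w -> fst w = i /\ t = pos w.
Proof.
  intros Hi [Hw1 Hw2] Heq. unfold phi in Heq.
  assert (Hqq : q i = q (fst w)).
  { destruct (Nat.eq_dec (q i) (q (fst w))) as [|Hne]; auto. exfalso.
    apply (Hdisj (q i) (q (fst w)) (Hqk i Hi) (Hqk _ Hw1) Hne t (pos w)); auto. }
  apply Hqinj in Hqq; auto. subst i. split; auto.
  destruct (Hray (q (fst w)) (Hqk _ Hw1)) as [Hinj _]. apply Hinj; auto.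
Qed.

Lemma seg_not_branch i j t w : 1 <= i <= n -> 1 <= j -> pos (i, j) < t < pos (i, S j) ->
  grid_vert n w -> Rs (q i) t = phi w -> False.
Proof.
  intros Hi Hj Ht Hw Heq. destruct (phi_eq_ray i t w Hi Hw Heq) as [Hw1 ->].
  destruct w as [i' j']. simpl in Hw1. subst i'. destruct Hw as [_ Hj']. simpl in Hj'.
  destruct (Nat.le_gt_cases j' j).
  - pose proof (pos_le i j' j Hi Hj' H). lia.
  - pose proof (pos_le i (S j) j' Hi ltac:(lia) ltac:(lia)). lia.
Qed.

Theorem construct : is_subdivision E (grid_vert n) HE phi Pp /\ rays_correspond n k Rs phi Pp.
Proof.
  split; [split; [|split; [|split]]|].
  -
    intros u v Hu Hv Heq. destruct u as [i j], v as [i' j'].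
    destruct Hu as [Hi Hj], Hv as [Hi' Hj']. simpl in *.
    destruct (phi_eq_ray i (pos (i, j)) (i', j') Hi (conj Hi' Hj') Heq) as [Hii Hp]. simpl in Hii. subst i'.
    destruct (Nat.lt_total j j') as [Hlt|[->|Hlt]]; auto.
    + pose proof (pos_strict i j j' Hi Hj Hlt). lia.
    + pose proof (pos_strict i j' j Hi Hj' Hlt). lia.
  -
    intros u v Huv. destruct (R3 u v Huv) as [[i [j [Hi [Hj [-> ->]]]]]|Hc].
    + rewrite Pp_ray. destruct (seg_path i j Hi Hj) as [H1 [H2 H3]]. split; auto.
    + rewrite (Pp_cross _ _ _ Hc). destruct (cross_spec _ _ _ Hc) as [H1 [H2 [H3 _]]].
      destruct (pos_cross _ _ _ Hc) as [Hpu Hpv]. unfold phi. rewrite Hpu, Hpv. split; auto.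
  -
    intros u v x Huv Hx [w [Hw Hwx]]. destruct (R3 u v Huv) as [[i [j [Hi [Hj [-> ->]]]]]|Hc].
    + rewrite Pp_ray in Hx. destruct (seg_inner i j x Hi Hj Hx) as [t [Ht ->]].
      apply (seg_not_branch i j t w Hi Hj Ht Hw). auto.
    + rewrite (Pp_cross _ _ _ Hc) in Hx. destruct (cross_spec _ _ _ Hc) as [_ [_ [_ [_ Hin]]]].
      destruct (phi_on w Hw) as [HS Hon]. apply (Hin x Hx _ HS). rewrite <- Hwx. auto.
  -
    intros u v u' v' x Huv Hu'v' Hx Hx'.
    destruct (R3 u v Huv) as [[i [j [Hi [Hj [-> ->]]]]]|Hc].
    + rewrite Pp_ray in Hx. destruct (seg_inner i j x Hi Hj Hx) as [t [Ht ->]].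
      destruct (R3 u' v' Hu'v') as [[i' [j' [Hi' [Hj' [-> ->]]]]]|Hc'].
      * rewrite Pp_ray in Hx'. destruct (seg_in i' j' _ Hi' Hj' Hx') as [t' [Ht' Heq]].
        assert (Hqq : q i = q i').
        { destruct (Nat.eq_dec (q i) (q i')) as [|Hne]; auto. exfalso.
          apply (Hdisj (q i) (q i') (Hqk i Hi) (Hqk i' Hi') Hne t t'); auto. }
        apply Hqinj in Hqq; auto. subst i'.
        destruct (Hray (q i) (Hqk i Hi)) as [Hinj _]. apply Hinj in Heq. subst t'.
        destruct (Nat.lt_total j j') as [Hlt|[->|Hlt]]; [| auto |].
        -- pose proof (pos_le i (S j) j' Hi ltac:(lia) ltac:(lia)). lia.
        -- pose proof (pos_le i (S j') j Hi ltac:(lia) ltac:(lia)). lia.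
      * exfalso. rewrite (Pp_cross _ _ _ Hc') in Hx'. destruct (cross_spec _ _ _ Hc') as [_ [H0 [Hl [_ Hin]]]].
        destruct (pos_cross _ _ _ Hc') as [Hpu Hpv].
        destruct (R2 _ _ _ Hc') as [_ [_ [Hgu [Hgv _]]]].
        destruct (in_split_pos _ _ Hx') as [Hz|[Hz|Hz]].
        -- apply (seg_not_branch i j t u' Hi Hj Ht Hgu). unfold phi. rewrite Hpu. unfold path, stp in *. congruence.
        -- apply (seg_not_branch i j t v' Hi Hj Ht Hgv). unfold phi. rewrite Hpv.
           unfold path, enp in *. eapply lst_unique; eauto.
        -- apply (Hin _ Hz (q i)); [exists i; auto|exists t; auto].
    + rewrite (Pp_cross _ _ _ Hc) in Hx. destruct (cross_spec _ _ _ Hc) as [_ [_ [_ [_ Hin]]]].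
      destruct (R3 u' v' Hu'v') as [[i' [j' [Hi' [Hj' [-> ->]]]]]|Hc'].
      * exfalso. rewrite Pp_ray in Hx'. destruct (seg_in i' j' _ Hi' Hj' Hx') as [t' [_ Heq]].
        apply (Hin x Hx (q i')); [exists i'; auto|exists t'; auto].
      * rewrite (Pp_cross _ _ _ Hc') in Hx'.
        destruct (Nat.lt_total (sg u) (sg u')) as [Hlt|[Heq|Hlt]].
        -- exfalso. apply (path_disj _ _ _ _ _ _ x Hlt Hc Hc'); auto. apply (inner_In _ _ Hx).
        -- rewrite Heq in Hc. rewrite Hc in Hc'. inversion Hc'. auto.
        -- exfalso. apply (path_disj _ _ _ _ _ _ x Hlt Hc' Hc); auto. apply (inner_In _ _ Hx).
  -
    intros i Hi. exists (q i), (fun j => pos (i, j)). split; [apply Hqk; auto|].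
    intros j Hj. split; [apply pos_step; auto|]. split; [reflexivity|].
    rewrite Pp_ray. reflexivity.
Qed.

End Constr.

Lemma odd_mod i : Nat.odd i = true <-> i mod 2 = 1.
Proof. rewrite Nat.odd_spec. unfold Nat.Odd. split.
- intros [m ->]. rewrite Nat.add_comm, Nat.mul_comm, Nat.Div0.mod_add. reflexivity.
- intros H. exists (i / 2). pose proof (Nat.div_mod_eq i 2). lia. Qed.

Lemma even_mod i : Nat.even i = true <-> i mod 2 = 0.
Proof. rewrite Nat.even_spec. unfold Nat.Even. split.
- intros [m ->]. rewrite Nat.mul_comm, Nat.Div0.mod_mul. reflexivity.
- intros H. exists (i / 2). pose proof (Nat.div_mod_eq i 2). lia. Qed.

Lemma decode n a b : b < n -> (a * n + b) / n = a /\ (a * n + b) mod n = b.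
Proof.
  intros Hb. split.
  - symmetry. apply (Nat.div_unique _ _ _ b); auto. lia.
  - symmetry. apply (Nat.mod_unique _ _ a); auto. lia.
Qed.

Ltac modf x c := pose proof (Nat.div_mod_eq x c); pose proof (Nat.mod_upper_bound x c ltac:(lia)).

Section Hex.
Variable n : nat.

Definition pairlow i j := (1 <=? i) && (i <? n) && (i mod 2 =? j mod 2).
Definition fwd j := (j mod 4 =? 1) || (j mod 4 =? 2).
Definition hcross s : option ((nat * nat) * (nat * nat)) :=
  let j := s / n + 1 in let i := s mod n + 1 in
  if pairlow i j then (if fwd j then Some ((i, j), (i + 1, j)) else Some ((i + 1, j), (i, j))) else None.
Definition hsg (w : nat * nat) := (snd w - 1) * n + (fst w - 1) -
  (if (2 <=? fst w) && pairlow (fst w - 1) (snd w) then 1 else 0).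

Lemma pairlow_true i j : pairlow i j = true <-> 1 <= i < n /\ i mod 2 = j mod 2.
Proof. unfold pairlow. rewrite !andb_true_iff, Nat.leb_le, Nat.ltb_lt, Nat.eqb_eq. tauto. Qed.

Lemma hsg_low i j : pairlow i j = true -> hsg (i, j) = (j - 1) * n + (i - 1).
Proof.
  intros H. apply pairlow_true in H. unfold hsg. cbn [fst snd].
  destruct ((2 <=? i) && pairlow (i - 1) j) eqn:E.
  - apply andb_true_iff in E. destruct E as [E1 E2]. apply Nat.leb_le in E1. apply pairlow_true in E2.
    exfalso. modf i 2. modf (i - 1) 2. modf j 2. lia.
  - nia.
Qed.

Lemma hsg_high i j : pairlow i j = true -> hsg (S i, j) = (j - 1) * n + (i - 1).
Proof.
  intros H. unfold hsg. cbn [fst snd]. replace (S i - 1) with i by lia. rewrite H.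
  apply pairlow_true in H. replace (2 <=? S i) with true by (symmetry; apply Nat.leb_le; lia). simpl. nia.
Qed.

Lemma hex_R1 i j : 1 <= i <= n -> 1 <= j -> hsg (i, j) < hsg (i, S j).
Proof.
  intros Hi Hj. unfold hsg. cbn [fst snd]. replace (S j - 1) with j by lia.
  assert (HH : j * n = (j - 1) * n + n) by (destruct j; [lia|]; simpl; rewrite Nat.sub_0_r; lia).
  destruct ((2 <=? i) && pairlow (i - 1) j) eqn:E1; destruct ((2 <=? i) && pairlow (i - 1) (S j)) eqn:E2;
  try (apply andb_true_iff in E2; destruct E2 as [E2 _]; apply Nat.leb_le in E2); lia.
Qed.

Lemma hex_R2 s u v : 1 <= n -> hcross s = Some (u, v) ->
  hsg u = s /\ hsg v = s /\ grid_vert n u /\ grid_vert n v /\ fst u <> fst v /\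
  ((u = (s mod n + 1, s / n + 1) /\ v = (s mod n + 2, s / n + 1)) \/
   (v = (s mod n + 1, s / n + 1) /\ u = (s mod n + 2, s / n + 1))) /\ 1 <= s mod n + 1 < n.
Proof.
  intros Hn Hc. unfold hcross in Hc.
  set (i := s mod n + 1) in *. set (j := s / n + 1) in *.
  assert (Hs : s = (j - 1) * n + (i - 1)).
  { unfold i, j. replace (s / n + 1 - 1) with (s / n) by lia. replace (s mod n + 1 - 1) with (s mod n) by lia.
    rewrite Nat.mul_comm. apply Nat.div_mod_eq. }
  destruct (pairlow i j) eqn:Hp; [|discriminate].
  pose proof (hsg_low i j Hp) as H1. pose proof (hsg_high i j Hp) as H2.
  apply pairlow_true in Hp.
  assert (Hgrid1 : grid_vert n (i, j)) by (split; simpl; lia).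
  assert (Hgrid2 : grid_vert n (i + 1, j)) by (split; simpl; lia).
  replace (i + 1) with (S i) in * by lia.
  destruct (fwd j); inversion Hc; subst u v; simpl.
  - repeat split; try lia; try (apply Hgrid1 || apply Hgrid2). left. split; f_equal; lia.
  - repeat split; try lia; try (apply Hgrid1 || apply Hgrid2). right. split; f_equal; lia.
Qed.

Lemma hex_R3 u v : 1 <= n -> hex_edge n u v -> ray_edge n u v \/ hcross (hsg u) = Some (u, v).
Proof.
  intros Hn [Hr|[[i [j [Hi [Hj [-> [-> Hc]]]]]]|[i [j [Hi [Hj [-> [-> Hc]]]]]]]]; [left; auto|right|right].
  - assert (Hp : pairlow i j = true).
    { apply pairlow_true. split; auto. rewrite odd_mod, even_mod in Hc. modf j 4. modf j 2. modf i 2. lia. }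
    rewrite (hsg_low i j Hp). unfold hcross. destruct (decode n (j - 1) (i - 1) ltac:(lia)) as [D1 D2].
    rewrite D1, D2. replace (i - 1 + 1) with i by lia. replace (j - 1 + 1) with j by lia. rewrite Hp.
    assert (Hf : fwd j = true).
    { unfold fwd. rewrite orb_true_iff, !Nat.eqb_eq. rewrite odd_mod, even_mod in Hc. lia. }
    rewrite Hf. f_equal. f_equal. f_equal. lia.
  - assert (Hp : pairlow i j = true).
    { apply pairlow_true. split; auto. rewrite odd_mod, even_mod in Hc. modf j 4. modf j 2. modf i 2. lia. }
    rewrite (hsg_high i j Hp). unfold hcross. destruct (decode n (j - 1) (i - 1) ltac:(lia)) as [D1 D2].
    rewrite D1, D2. replace (i - 1 + 1) with i by lia. replace (j - 1 + 1) with j by lia. rewrite Hp.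
    assert (Hf : fwd j = false).
    { unfold fwd. rewrite orb_false_iff, !Nat.eqb_neq. rewrite odd_mod, even_mod in Hc. lia. }
    rewrite Hf. f_equal. f_equal. f_equal. lia.
Qed.

End Hex.

Lemma parity_cases j : 1 <= j -> (exists b, j = 2 * b + 1 /\ Nat.odd j = true) \/ (exists b, j = 2 * b + 2 /\ Nat.odd j = false).
Proof.
  intros Hj. modf j 2. destruct (Nat.eq_dec (j mod 2) 1) as [H1|H1].
  - left. exists (j / 2). split; [lia|]. apply odd_mod. auto.
  - right. exists (j / 2 - 1). split; [lia|]. destruct (Nat.odd j) eqn:E; auto. apply odd_mod in E. lia.
Qed.

Lemma half_odd b : (2 * b + 1 - 1) / 2 = b.
Proof. replace (2 * b + 1 - 1) with (b * 2 + 0) by lia. apply decode. lia. Qed.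
Lemma half_even b : (2 * b + 2 - 1) / 2 = b.
Proof. replace (2 * b + 2 - 1) with (b * 2 + 1) by lia. apply decode. lia. Qed.

Section Circ.
Variable n : nat.
Hypothesis Hn : 2 <= n.

Definition ccross s : option ((nat * nat) * (nat * nat)) :=
  let b := s / n in let r := s mod n in let j := 2 * b + 1 in
  if r =? 0 then Some ((1, j), (2, j))
  else if r =? n - 1 then Some ((n, S j), (1, S j))
  else Some ((r + 1, S j), (r + 2, j)).

Definition csg (w : nat * nat) :=
  let b := (snd w - 1) / 2 in
  if Nat.odd (snd w) then (if fst w =? 1 then b * n else b * n + fst w - 2)
  else (if fst w =? 1 then b * n + n - 1 else b * n + fst w - 1).

Lemma csg_odd0 i b : csg (i, 2 * b + 1) = if i =? 1 then b * n else b * n + i - 2.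
Proof.
  unfold csg. cbn [fst snd]. rewrite half_odd.
  assert (Nat.odd (2 * b + 1) = true) by (apply odd_mod; rewrite Nat.add_comm, Nat.mul_comm, Nat.Div0.mod_add; auto).
  rewrite H. auto.
Qed.

Lemma csg_even0 i b : csg (i, 2 * b + 2) = if i =? 1 then b * n + n - 1 else b * n + i - 1.
Proof.
  unfold csg. cbn [fst snd]. rewrite half_even.
  destruct (Nat.odd (2 * b + 2)) eqn:E; auto.
  apply odd_mod in E. replace (2 * b + 2) with (2 + b * 2) in E by lia.
  rewrite Nat.Div0.mod_add in E. discriminate.
Qed.

Lemma csg_odd i j b : j = 2 * b + 1 -> csg (i, j) = if i =? 1 then b * n else b * n + i - 2.
Proof. intros ->. apply csg_odd0. Qed.
Lemma csg_even i j b : j = 2 * b + 2 -> csg (i, j) = if i =? 1 then b * n + n - 1 else b * n + i - 1.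
Proof. intros ->. apply csg_even0. Qed.

Lemma circ_R1 i j : 1 <= i <= n -> 1 <= j -> csg (i, j) < csg (i, S j).
Proof.
  intros Hi Hj. destruct (parity_cases j Hj) as [[b [-> _]]|[b [-> _]]].
  - rewrite (csg_odd i (2 * b + 1) b), (csg_even i (S (2 * b + 1)) b) by lia.
    destruct (Nat.eqb_spec i 1); lia.
  - rewrite (csg_odd i (S (2 * b + 2)) (S b)), (csg_even i (2 * b + 2) b) by lia.
    destruct (Nat.eqb_spec i 1); simpl; nia.
Qed.

Lemma circ_R2 s u v : ccross s = Some (u, v) ->
  csg u = s /\ csg v = s /\ grid_vert n u /\ grid_vert n v /\ fst u <> fst v /\
  ((fst v = S (fst u) /\ 1 <= fst u < n) \/ (fst u = n /\ fst v = 1)).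
Proof.
  intros Hc. unfold ccross in Hc.
  set (b := s / n) in *. set (r := s mod n) in *.
  assert (Hs : s = b * n + r) by (unfold b, r; rewrite Nat.mul_comm; apply Nat.div_mod_eq).
  assert (Hr : r < n) by (apply Nat.mod_upper_bound; lia).
  destruct (Nat.eqb_spec r 0) as [Hr0|Hr0].
  - inversion Hc; subst u v. rewrite (csg_odd 1 _ b), (csg_odd 2 _ b) by lia. simpl.
    repeat split; simpl; lia.
  - destruct (Nat.eqb_spec r (n - 1)) as [Hr1|Hr1].
    + inversion Hc; subst u v. rewrite (csg_even n _ b), (csg_even 1 _ b) by lia.
      destruct (Nat.eqb_spec n 1); [lia|]. simpl.
      repeat split; simpl; lia.
    + inversion Hc; subst u v. rewrite (csg_even (r + 1) _ b), (csg_odd (r + 2) _ b) by lia.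
      destruct (Nat.eqb_spec (r + 1) 1); [lia|]. destruct (Nat.eqb_spec (r + 2) 1); [lia|].
      repeat split; simpl; lia.
Qed.

Lemma circ_R3 u v : circ_edge n u v -> ray_edge n u v \/ ccross (csg u) = Some (u, v).
Proof.
  intros [Hr|[[i [j [Hi [Hj [Ho [-> ->]]]]]]|[[j [_ [Hj [Ho [-> ->]]]]]|[j [_ [Hj [He [-> ->]]]]]]]]; [left; auto|right|right|right].
  - apply odd_mod in Ho. destruct (parity_cases j Hj) as [[b [-> _]]|[b [-> _]]]; [|exfalso; modf (2*b+2) 2; lia].
    rewrite (csg_even i _ b) by lia.
    destruct (Nat.eqb_spec i 1); [lia|].
    unfold ccross. replace (b * n + i - 1) with (b * n + (i - 1)) by lia.
    destruct (decode n b (i - 1) ltac:(lia)) as [D1 D2]. rewrite D1, D2.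
    destruct (Nat.eqb_spec (i - 1) 0); [lia|]. destruct (Nat.eqb_spec (i - 1) (n - 1)); [lia|].
    f_equal. f_equal; f_equal; lia.
  - apply odd_mod in Ho. destruct (parity_cases j Hj) as [[b [-> _]]|[b [-> _]]]; [|exfalso; modf (2*b+2) 2; lia].
    rewrite (csg_odd 1 _ b) by lia. simpl. unfold ccross. replace (b * n) with (b * n + 0) by lia.
    destruct (decode n b 0 ltac:(lia)) as [D1 D2]. rewrite D1, D2. simpl. reflexivity.
  - apply even_mod in He. destruct (parity_cases j Hj) as [[b [-> _]]|[b [-> _]]]; [exfalso; modf (2*b+1) 2; lia|].
    rewrite (csg_even n _ b) by lia. destruct (Nat.eqb_spec n 1); [lia|].
    unfold ccross. replace (b * n + n - 1) with (b * n + (n - 1)) by lia.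
    destruct (decode n b (n - 1) ltac:(lia)) as [D1 D2]. rewrite D1, D2.
    destruct (Nat.eqb_spec (n - 1) 0); [lia|]. rewrite Nat.eqb_refl.
    f_equal. f_equal; f_equal; lia.
Qed.

End Circ.

Lemma hcross_small n s : n <= 1 -> hcross n s = None.
Proof.
  intros Hn. unfold hcross. destruct (pairlow n (s mod n + 1) (s / n + 1)) eqn:E; auto.
  apply pairlow_true in E. lia.
Qed.

Lemma hex_small n u v : n <= 1 -> hex_edge n u v -> ray_edge n u v.
Proof. intros Hn [H|[[i [j [Hi _]]]|[i [j [Hi _]]]]]; auto; lia. Qed.

Theorem theorem5p1 :
  forall n : nat, exists k : nat,
    forall (V : Type) (E : V -> V -> Prop) (w : (nat -> V) -> Prop)
           (Rs : nat -> nat -> V),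
      is_end E w ->
      end_indeg_ge E w k ->
      (forall m, m < k -> is_ray E (Rs m) /\ w (Rs m)) ->
      (forall m m', m < k -> m' < k -> m <> m' -> rays_disjoint (Rs m) (Rs m')) ->
      (exists phi P, is_subdivision E (grid_vert n) (hex_edge n) phi P /\
                     rays_correspond n k Rs phi P) \/
      (exists phi P, is_subdivision E (grid_vert n) (circ_edge n) phi P /\
                     rays_correspond n k Rs phi P).
Proof.
  intros n. exists (Kc n). intros V E w Rs Hend _ HRs Hdisj.
  set (k := Kc n).
  assert (Hray : forall m, m < k -> is_ray E (Rs m)) by (intros m Hm; apply HRs; auto).
  destruct Hend as [r0 [Hr0 Hw]].
  assert (Hle : forall a, a < k -> ray_le E (Rs a) r0 /\ ray_le E r0 (Rs a)).
  { intros a Ha. destruct (HRs a Ha) as [_ Hwa]. apply Hw in Hwa. destruct Hwa as [_ [H1 H2]]. auto. }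
  assert (Hk2 : 2 <= k) by (unfold k, Kc; lia).
  destruct (Nat.le_gt_cases n 1) as [Hn|Hn].
  - left. set (q := fun _ : nat => 0).
    destruct (construct k Rs Hray Hdisj n q (fun i _ => ltac:(unfold q; lia))
               (fun i j Hi Hj _ => ltac:(lia)) (hcross n) (hsg n) (hex_edge n)) as [H1 H2].
    + intros i j Hi Hj. apply hex_R1; auto.
    + intros s u v Hc. rewrite hcross_small in Hc; auto. discriminate.
    + intros u v Huv. left. apply hex_small; auto.
    + eexists. eexists. split; eauto.
  - assert (HG : forall a b, Hg (E:=E) k Rs a b -> a < k /\ b < k) by (intros a b [Ha [Hb _]]; auto).
    assert (Hsc := strong_conn (E:=E) k Rs Hdisj r0 Hr0 Hle).
    destruct (comb (Hg (E:=E) k Rs) k n HG Hsc ltac:(lia) (le_n _)) as [q [[Hqk Hqinj] Hpat]].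
    assert (HS : forall c, SSq n q c -> c < k) by (intros c [i [Hi ->]]; auto).
    assert (HRt : forall a b, Wk (Hg (E:=E) k Rs) (nQ n q) a b -> @Rt V E Rs (SSq n q) a b).
    { intros a b HW. apply (Rt_of_walk k Rs Hray Hdisj (SSq n q) HS a b). exact HW. }
    destruct Hpat as [Hhex|[Hc1 Hc2]].
    + left.
      destruct (construct k Rs Hray Hdisj n q Hqk Hqinj (hcross n) (hsg n) (hex_edge n)) as [H1 H2].
      * intros i j Hi Hj. apply hex_R1; auto.
      * intros s u v Hc. destruct (hex_R2 n s u v ltac:(lia) Hc) as [Hu [Hv [Hgu [Hgv [Hne [Hpos Hr]]]]]].
        repeat split; auto; try apply Hgu; try apply Hgv.
        destruct (Hhex (s mod n + 1) ltac:(lia) ltac:(lia)) as [W1 W2].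
        destruct Hpos as [[-> ->]|[-> ->]]; simpl.
        -- replace (s mod n + 2) with (S (s mod n + 1)) by lia. apply HRt; auto.
        -- replace (s mod n + 2) with (S (s mod n + 1)) by lia. apply HRt; auto.
      * intros u v Huv. apply hex_R3; auto; lia.
      * eexists. eexists. split; eauto.
    + right.
      destruct (construct k Rs Hray Hdisj n q Hqk Hqinj (ccross n) (csg n) (circ_edge n)) as [H1 H2].
      * intros i j Hi Hj. apply circ_R1; auto; lia.
      * intros s u v Hc. destruct (circ_R2 n ltac:(lia) s u v Hc) as [Hu [Hv [Hgu [Hgv [Hne Hpat]]]]].
        repeat split; auto; try apply Hgu; try apply Hgv.
        destruct Hpat as [[Hv1 Hu1]|[Hu1 Hv1]].
        -- rewrite Hv1. apply HRt. apply Hc1; lia.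
        -- rewrite Hu1, Hv1. apply HRt. exact Hc2.
      * intros u v Huv. apply circ_R3; auto; lia.
      * eexists. eexists. split; eauto.
Qed.
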